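(* Let $X$ be a space with property A, $E$ a Banach space, $p\in(1,\infty)$ and $q$ its conjugate index. For each $n\in\mathbb{N}$ let $\{\phi_i^{(n)}\}_{i\in I_n}$ be a metric $p$-partition of unity on $X$ with $(n,1/n)$-variation, and define $M_n:\mathcal{A}^p_E(X)\to\mathcal{A}^p_E(X)$ by $M_n(A)=\sum_{i\in I_n}(\phi_i^{(n)})^{p/q}A\phi_i^{(n)}$ (strongly convergent sum). Then each $M_n$ is a well-defined linear map of norm one, and $M_n(A)\to A$ in norm as $n\to\infty$ for every $A\in\mathcal{A}^p_E(X)$.
   Context: A *space* is a metric space $(X,d)$ that is strongly discrete (the set $\{d(x,y):x,y\in X\}$ is a discrete subset of $\mathbb{R}$) and has bounded geometry (for every $r>0$, $\sup_{x\in X}|B(x;r)|<\infty$). $\ell^p_E(X)$ is the Banach space of $p$-summable functions $X\to E$; a bounded function $\phi:X\to\mathbb{C}$ acts by pointwise multiplication. A bounded operator $A$ has matrix entries $A_{xy}\in\mathcal{L}(E)$, $A_{xy}e=(A(\delta_ye))(x)$; a band operator is an $X\times X$ matrix with uniformly bounded entries and finite propagation $\sup\{d(x,y):A_{xy}\ne0\}$, acting by matrix multiplication; $\mathcal{A}^p_E(X)$ is the norm closure of the band operators in $\mathcal{L}(\ell^p_E(X))$. A metric $p$-partition of unity on $X$ is a family $\{\phi_i:X\to[0,1]\}_{i\in I}$ such that (i) there is $N$ with at most $N$ of the $\phi_i(x)$ nonzero for each $x$; (ii) $\sup_i\operatorname{diam}\{x:\phi_i(x)\ne0\}<\infty$;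 (iii) $\sum_i\phi_i(x)^p=1$ for all $x$. It has $(r,\epsilon)$-variation if $d(x,y)\le r$ implies $\sum_i|\phi_i(x)-\phi_i(y)|^p<\epsilon^p$. $X$ has property A if for all $r,\epsilon>0$ there is a metric $p$-partition of unity with $(r,\epsilon)$-variation (independent of $p\in[1,\infty)$). *)

(* Defs.v *)
From Stdlib Require Import Reals List ClassicalEpsilon.
Import ListNotations.
Open Scope R_scope.
Set Implicit Arguments.

(** * Real powers with the convention 0^a = 0 (for a > 0 this is the usual value). *)
Definition rpow (a b : R) : R := if Rle_dec a 0 then 0 else Rpower a b.

Definition Rsup (S : R -> Prop) : R :=
  epsilon (inhabits 0) (fun m => is_lub S m).

Definition lsum {T : Type} (L : list T) (g : T -> R) : R :=
  fold_right (fun x acc => g x + acc) 0 L.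

Record Banach := {
  bcar :> Type;
  bzero : bcar;
  badd : bcar -> bcar -> bcar;
  bopp : bcar -> bcar;
  bscal : R -> bcar -> bcar;
  bnorm : bcar -> R;
  badd_assoc : forall x y z, badd x (badd y z) = badd (badd x y) z;
  badd_comm : forall x y, badd x y = badd y x;
  badd_0 : forall x, badd bzero x = x;
  badd_opp : forall x, badd x (bopp x) = bzero;
  bscal_1 : forall x, bscal 1 x = x;
  bscal_assoc : forall a b x, bscal a (bscal b x) = bscal (a * b) x;
  bscal_distr_l : forall a x y, bscal a (badd x y) = badd (bscal a x) (bscal a y);
  bscal_distr_r : forall a b x, bscal (a + b) x = badd (bscal a x) (bscal b x);
  bnorm_nonneg : forall x, 0 <= bnorm x;
  bnorm_eq0 : forall x, bnorm x = 0 -> x = bzero;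
  bnorm_scal : forall a x, bnorm (bscal a x) = Rabs a * bnorm x;
  bnorm_triangle : forall x y, bnorm (badd x y) <= bnorm x + bnorm y;
  bcomplete : forall u : nat -> bcar,
    (forall eps, 0 < eps -> exists N, forall m n, (N <= m)%nat -> (N <= n)%nat ->
        bnorm (badd (u m) (bopp (u n))) < eps) ->
    exists l, forall eps, 0 < eps -> exists N, forall n, (N <= n)%nat ->
        bnorm (badd (u n) (bopp l)) < eps
}.

Record MetricSpace := {
  mcar :> Type;
  dist : mcar -> mcar -> R;
  dist_nonneg : forall x y, 0 <= dist x y;
  dist_eq0 : forall x y, dist x y = 0 <-> x = y;
  dist_sym : forall x y, dist x y = dist y x;
  dist_triangle : forall x y z, dist x z <= dist x y + dist y z
}.

Definition strongly_discrete (X : MetricSpace) : Prop :=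
  forall t, (exists x y : X, t = dist X x y) ->
    exists delta, 0 < delta /\
      forall x y : X, dist X x y <> t -> delta <= Rabs (dist X x y - t).

Definition bounded_geometry (X : MetricSpace) : Prop :=
  forall r, 0 < r -> exists K : nat, forall x : X,
    exists L : list X, (length L <= K)%nat /\
      forall y : X, dist X x y <= r -> In y L.

Definition is_space (X : MetricSpace) : Prop :=
  strongly_discrete X /\ bounded_geometry X.

Definition metric_p_partition (X : MetricSpace) (p : R) (I : Type)
    (phi : I -> X -> R) : Prop :=
  (forall i x, 0 <= phi i x <= 1) /\
  (exists N : nat, forall x (L : list I), NoDup L ->
      (forall i, In i L -> phi i x <> 0) -> (length L <= N)%nat) /\
  (exists D, forall i x y, phi i x <> 0 -> phi i y <> 0 -> dist X x y <= D) /\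
  (forall x, exists L : list I, NoDup L /\
      (forall i, phi i x <> 0 -> In i L) /\
      lsum L (fun i => rpow (phi i x) p) = 1).

(** (r,eps)-variation: d(x,y) <= r implies sum_i |phi_i(x)-phi_i(y)|^p < eps^p
    (the sum is finite; it is computed over any duplicate-free list covering the
    indices where phi_i(x) or phi_i(y) is nonzero). *)
Definition has_variation (X : MetricSpace) (p : R) (I : Type)
    (phi : I -> X -> R) (r eps : R) : Prop :=
  forall x y : X, dist X x y <= r ->
    exists L : list I, NoDup L /\
      (forall i, phi i x <> 0 \/ phi i y <> 0 -> In i L) /\
      lsum L (fun i => rpow (Rabs (phi i x - phi i y)) p) < rpow eps p.

Definition property_A (X : MetricSpace) (p : R) : Prop :=
  forall r eps, 0 < r -> 0 < eps ->
    exists (I : Type) (phi : I -> X -> R),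
      metric_p_partition X p phi /\ has_variation X p phi r eps.

Section Lp.
Variables (X : MetricSpace) (E : Banach) (p : R).

Definition fadd (f g : X -> E) : X -> E := fun x => badd E (f x) (g x).
Definition fscal (a : R) (f : X -> E) : X -> E := fun x => bscal E a (f x).
Definition fsub (f g : X -> E) : X -> E := fun x => badd E (f x) (bopp E (g x)).
Definition fmul (phi : X -> R) (f : X -> E) : X -> E := fun x => bscal E (phi x) (f x).

Definition psums (f : X -> E) : R -> Prop :=
  fun s => exists L : list X, NoDup L /\ s = lsum L (fun x => rpow (bnorm E (f x)) p).

Definition is_lp (f : X -> E) : Prop :=
  exists M, forall s, psums f s -> s <= M.

Definition lp_norm (f : X -> E) : R := rpow (Rsup (psums f)) (/ p).

Definition Op := (X -> E) -> (X -> E).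

Definition oadd (A B : Op) : Op := fun f => fadd (A f) (B f).
Definition oscal (a : R) (A : Op) : Op := fun f => fscal a (A f).
Definition osub (A B : Op) : Op := fun f => fsub (A f) (B f).

(** Bounded linear operator on l^p_E(X) (only its action on l^p matters). *)
Definition bounded_op (A : Op) : Prop :=
  (forall f, is_lp f -> is_lp (A f)) /\
  (forall f g a, is_lp f -> is_lp g ->
      forall x, A (fadd f (fscal a g)) x = badd E (A f x) (bscal E a (A g x))) /\
  (exists C, forall f, is_lp f -> lp_norm (A f) <= C * lp_norm f).

Definition opnorm (A : Op) : R :=
  Rsup (fun s => exists f, is_lp f /\ lp_norm f <= 1 /\ s = lp_norm (A f)).

Definition delta (y : X) (e : E) : X -> E :=
  fun x => if excluded_middle_informative (x = y) then e else bzero E.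

Definition entry (A : Op) (x y : X) (e : E) : E := A (delta y e) x.

(** Band operator: bounded operator whose matrix has finite propagation
    (for a bounded operator on l^p, p < oo, the matrix entries are uniformly
    bounded and the operator acts by matrix multiplication). *)
Definition is_band (A : Op) : Prop :=
  bounded_op A /\
  exists R0, forall x y e, R0 < dist X x y -> entry A x y e = bzero E.

Definition in_Ap (A : Op) : Prop :=
  bounded_op A /\
  forall eps, 0 < eps -> exists B, is_band B /\ opnorm (osub A B) < eps.

Definition partial_M (q : R) (I : Type) (phi : I -> X -> R) (A : Op)
    (L : list I) : Op :=
  fun f => fold_right (fun i acc => fadd (fmul (fun x => rpow (phi i x) (p / q))
                                               (A (fmul (phi i) f))) acc)
                      (fun _ => bzero E) L.

Definition strong_sum (q : R) (I : Type) (phi : I -> X -> R) (A M : Op) : Prop :=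
  forall f, is_lp f ->
    forall eps, 0 < eps -> exists L0 : list I, NoDup L0 /\
      forall L : list I, NoDup L -> incl L0 L ->
        lp_norm (fsub (partial_M q phi A L f) (M f)) < eps.

End Lp.

(* Main.v *)
Require Import Defs.
From Stdlib Require Import Reals List ClassicalEpsilon Lra Lia Permutation FunctionalExtensionality.
Import ListNotations.
Open Scope R_scope.

Definition dec (P : Prop) : bool := if excluded_middle_informative P then true else false.
Lemma decT (P : Prop) : P -> dec P = true.
Proof. unfold dec; destruct (excluded_middle_informative P); tauto. Qed.
Lemma decF (P : Prop) : ~ P -> dec P = false.
Proof. unfold dec; destruct (excluded_middle_informative P); tauto. Qed.
Lemma decP (P : Prop) : dec P = true <-> P.
Proof. unfold dec; destruct (excluded_middle_informative P); split; intros; try tauto; discriminate. Qed.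

Definition eqd {T : Type} : forall x y : T, {x = y} + {x <> y} :=
  fun x y => excluded_middle_informative (x = y).

Section GS.
Variables (V : Type) (add : V -> V -> V) (z : V).
Hypothesis add_assoc : forall x y w, add x (add y w) = add (add x y) w.
Hypothesis add_comm : forall x y, add x y = add y x.
Hypothesis add_z : forall x, add z x = x.

Definition gsum {T : Type} (L : list T) (g : T -> V) : V :=
  fold_right (fun i acc => add (g i) acc) z L.

Lemma gsum_nil {T} (g : T -> V) : gsum [] g = z.
Proof. reflexivity. Qed.
Lemma gsum_cons {T} a L (g : T -> V) : gsum (a :: L) g = add (g a) (gsum L g).
Proof. reflexivity. Qed.

Lemma gsum_app {T} (L1 L2 : list T) g : gsum (L1 ++ L2) g = add (gsum L1 g) (gsum L2 g).
Proof.
  induction L1; simpl. now rewrite add_z. rewrite IHL1. apply add_assoc.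
Qed.

Lemma gsum_perm {T} (L1 L2 : list T) g : Permutation L1 L2 -> gsum L1 g = gsum L2 g.
Proof.
  induction 1; simpl; auto.
  - now rewrite IHPermutation.
  - rewrite !add_assoc. now rewrite (add_comm (g y)).
  - congruence.
Qed.

Lemma gsum_ext_in {T} (L : list T) g1 g2 : (forall i, In i L -> g1 i = g2 i) ->
  gsum L g1 = gsum L g2.
Proof.
  induction L; simpl; intros H; auto. rewrite H by auto. rewrite IHL; auto.
Qed.

Lemma gsum_zero {T} (L : list T) g : (forall i, In i L -> g i = z) -> gsum L g = z.
Proof.
  induction L; simpl; intros H; auto. rewrite H by auto. rewrite IHL; auto.
Qed.

Lemma gsum_add {T} (L : list T) f g :
  gsum L (fun i => add (f i) (g i)) = add (gsum L f) (gsum L g).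
Proof.
  induction L; simpl. now rewrite add_z. rewrite IHL.
  rewrite !add_assoc. f_equal. rewrite <- !add_assoc. f_equal. apply add_comm.
Qed.

Definition nzf {T} (g : T -> V) : T -> bool := fun i => negb (dec (g i = z)).

Lemma gsum_filter {T} (L : list T) g : gsum L g = gsum (filter (nzf g) L) g.
Proof.
  induction L; simpl; auto. unfold nzf at 1. destruct (excluded_middle_informative (g a = z)) as [e|e].
  - rewrite decT by auto. simpl. rewrite e, add_z. auto.
  - rewrite decF by auto. simpl. now rewrite IHL.
Qed.

Lemma gsum_reindex {T} (L1 L2 : list T) g : NoDup L1 -> NoDup L2 ->
  (forall i, g i <> z -> (In i L1 <-> In i L2)) -> gsum L1 g = gsum L2 g.
Proof.
  intros N1 N2 H. rewrite (gsum_filter L1), (gsum_filter L2).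
  apply gsum_perm. apply NoDup_Permutation; try apply NoDup_filter; auto.
  intros i. rewrite !filter_In. unfold nzf.
  destruct (excluded_middle_informative (g i = z)) as [e|e].
  - rewrite decT by auto. simpl. split; intros [_ h]; discriminate.
  - rewrite decF by auto. simpl. specialize (H i e). tauto.
Qed.

Lemma gsum_swap {A B} (L1 : list A) (L2 : list B) (h : A -> B -> V) :
  gsum L1 (fun x => gsum L2 (fun i => h x i)) = gsum L2 (fun i => gsum L1 (fun x => h x i)).
Proof.
  induction L1; simpl.
  - symmetry. apply gsum_zero. auto.
  - rewrite IHL1. symmetry. apply (gsum_add L2 (fun i => h a i)).
Qed.
End GS.

Arguments gsum {V} add z {T} L g.
Arguments nzf {V} z {T} g _.

Lemma lsum_gsum {T} (L : list T) g : lsum L g = gsum Rplus 0 L g.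
Proof. reflexivity. Qed.

Lemma lsum_app {T} (L1 L2 : list T) g : lsum (L1 ++ L2) g = lsum L1 g + lsum L2 g.
Proof. apply gsum_app; intros; ring. Qed.

Lemma lsum_perm {T} (L1 L2 : list T) g : Permutation L1 L2 -> lsum L1 g = lsum L2 g.
Proof. apply gsum_perm; intros; ring. Qed.

Lemma lsum_ext_in {T} (L : list T) g1 g2 : (forall i, In i L -> g1 i = g2 i) ->
  lsum L g1 = lsum L g2.
Proof. apply gsum_ext_in. Qed.

Lemma lsum_nonneg {T} (L : list T) g : (forall i, In i L -> 0 <= g i) -> 0 <= lsum L g.
Proof. induction L; simpl; intros H. lra. pose proof (H a (or_introl eq_refl)).
  pose proof (IHL (fun i h => H i (or_intror h))). lra. Qed.

Lemma lsum_le {T} (L : list T) g1 g2 : (forall i, In i L -> g1 i <= g2 i) ->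
  lsum L g1 <= lsum L g2.
Proof. induction L; simpl; intros H. lra. pose proof (H a (or_introl eq_refl)).
  pose proof (IHL (fun i h => H i (or_intror h))). lra. Qed.

Lemma lsum_plus {T} (L : list T) f g : lsum L (fun i => f i + g i) = lsum L f + lsum L g.
Proof. induction L; simpl. ring. rewrite IHL; ring. Qed.

Lemma lsum_mult_l {T} (L : list T) c g : lsum L (fun i => c * g i) = c * lsum L g.
Proof. induction L; simpl. ring. rewrite IHL; ring. Qed.

Lemma lsum_zero {T} (L : list T) g : (forall i, In i L -> g i = 0) -> lsum L g = 0.
Proof. intros H; apply gsum_zero; auto; intros; ring. Qed.

Lemma lsum_swap {A B} (L1 : list A) (L2 : list B) (h : A -> B -> R) :
  lsum L1 (fun x => lsum L2 (fun i => h x i)) = lsum L2 (fun i => lsum L1 (fun x => h x i)).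
Proof. apply gsum_swap; intros; ring. Qed.

Lemma lsum_elem {T} (L : list T) g x : (forall i, In i L -> 0 <= g i) -> In x L ->
  g x <= lsum L g.
Proof.
  induction L; simpl; intros H Hx. contradiction.
  destruct Hx as [<-|Hx].
  - pose proof (lsum_nonneg L g (fun i h => H i (or_intror h))). lra.
  - pose proof (H a (or_introl eq_refl)). pose proof (IHL (fun i h => H i (or_intror h)) Hx). lra.
Qed.

Lemma lsum_sub {T} (K L : list T) g : NoDup K -> NoDup L -> incl K L ->
  (forall i, 0 <= g i) -> lsum K g <= lsum L g.
Proof.
  revert L. induction K as [|a K IH]; intros L NK NL Hi Hg.
  - simpl. apply lsum_nonneg; auto.
  - assert (Ha : In a L) by (apply Hi; left; auto).
    destruct (in_split a L Ha) as [l1 [l2 ->]].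
    rewrite lsum_app. simpl.
    inversion NK; subst.
    assert (HH : lsum K g <= lsum (l1 ++ l2) g).
    { apply IH; auto. eapply NoDup_remove_1; eauto.
      intros b Hb. assert (In b (l1 ++ a :: l2)) by (apply Hi; right; auto).
      apply in_app_or in H. apply in_or_app. destruct H as [H|[H|H]]; auto.
      subst; contradiction. }
    rewrite lsum_app in HH. lra.
Qed.

Lemma lsum_filter {T} (L : list T) (g : T -> R) :
  lsum L g = lsum (filter (nzf 0 g) L) g.
Proof. apply gsum_filter; intros; ring. Qed.

Lemma lsum_incl {T} (K L : list T) g : NoDup K -> NoDup L ->
  (forall i, In i K -> g i <> 0 -> In i L) ->
  (forall i, 0 <= g i) -> lsum K g <= lsum L g.
Proof.
  intros NK NL H Hg. rewrite lsum_filter.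
  apply lsum_sub; auto. apply NoDup_filter; auto.
  intros i Hi. apply filter_In in Hi. destruct Hi as [Hi Hn].
  apply H; auto. unfold nzf in Hn. intros e. rewrite decT in Hn by auto. discriminate.
Qed.

Lemma lsum_len {T} (L : list T) g m : (forall i, In i L -> g i <= m) ->
  lsum L g <= INR (length L) * m.
Proof.
  induction L; simpl; intros H. lra.
  pose proof (H a (or_introl eq_refl)). pose proof (IHL (fun i h => H i (or_intror h))).
  destruct (length L). simpl in *. lra. lra.
Qed.
Lemma rpow_pos a b : 0 < a -> rpow a b = Rpower a b.
Proof. intros. unfold rpow. destruct (Rle_dec a 0); [lra|auto]. Qed.
Lemma rpow_le0 a b : a <= 0 -> rpow a b = 0.
Proof. intros. unfold rpow. destruct (Rle_dec a 0); [auto|lra]. Qed.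
Lemma rpow_0 b : rpow 0 b = 0.
Proof. apply rpow_le0; lra. Qed.
Lemma Rpower_gt0 a b : 0 < Rpower a b.
Proof. unfold Rpower. apply exp_pos. Qed.
Lemma rpow_nonneg a b : 0 <= rpow a b.
Proof. unfold rpow. destruct (Rle_dec a 0). lra. left; apply Rpower_gt0. Qed.
Lemma rpow_gt0 a b : 0 < a -> 0 < rpow a b.
Proof. intros. rewrite rpow_pos; auto. apply Rpower_gt0. Qed.
Lemma rpow_1 a : 0 <= a -> rpow a 1 = a.
Proof. intros [H|H]. rewrite rpow_pos; auto. apply Rpower_1; auto. subst; apply rpow_0. Qed.
Lemma rpow_one b : rpow 1 b = 1.
Proof. rewrite rpow_pos by lra. unfold Rpower. rewrite ln_1, Rmult_0_r. apply exp_0. Qed.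

Lemma rpow_mult a b c : 0 <= a -> 0 <= b -> rpow (a * b) c = rpow a c * rpow b c.
Proof.
  intros [Ha|Ha] [Hb|Hb].
  - rewrite !rpow_pos; try nra. symmetry. apply Rpower_mult_distr; auto.
  - subst. rewrite Rmult_0_r, rpow_0. ring.
  - subst. rewrite Rmult_0_l, rpow_0. ring.
  - subst. rewrite Rmult_0_l, rpow_0. ring.
Qed.

Lemma rpow_rpow a b c : 0 <= a -> rpow (rpow a b) c = rpow a (b * c).
Proof.
  intros [Ha|Ha].
  - rewrite (rpow_pos a b) by auto. rewrite rpow_pos by apply Rpower_gt0.
    rewrite rpow_pos by auto. apply Rpower_mult.
  - subst. rewrite !rpow_0. reflexivity.
Qed.

Lemma rpow_plus a b c : 0 <= a -> rpow a (b + c) = rpow a b * rpow a c.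
Proof.
  intros [Ha|Ha].
  - rewrite !rpow_pos by auto. apply Rpower_plus.
  - subst. rewrite !rpow_0. ring.
Qed.

Lemma rpow_inv a b : 0 <= a -> b <> 0 -> rpow (rpow a b) (/ b) = a.
Proof.
  intros Ha Hb. rewrite rpow_rpow by auto. rewrite Rinv_r by auto. apply rpow_1; auto.
Qed.

Lemma rpow_le a b c : 0 <= a <= b -> 0 <= c -> rpow a c <= rpow b c.
Proof.
  intros [[Ha|Ha] Hab] Hc.
  - rewrite !rpow_pos by lra. apply Rle_Rpower_l; lra.
  - subst. rewrite rpow_0. apply rpow_nonneg.
Qed.

Lemma rpow_lt a b c : 0 <= a < b -> 0 < c -> rpow a c < rpow b c.
Proof.
  intros [[Ha|Ha] Hab] Hc.
  - rewrite !rpow_pos by lra. apply Rlt_Rpower_l; lra.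
  - subst. rewrite rpow_0. apply rpow_gt0; lra.
Qed.

Lemma rpow_le_inv a b c : 0 <= a -> 0 <= b -> 0 < c -> rpow a c <= rpow b c -> a <= b.
Proof.
  intros Ha Hb Hc H. destruct (Rle_lt_dec a b); auto.
  assert (rpow b c < rpow a c) by (apply rpow_lt; lra). lra.
Qed.

Lemma rpow_lt_inv a b c : 0 <= a -> 0 <= b -> 0 < c -> rpow a c < rpow b c -> a < b.
Proof.
  intros Ha Hb Hc H. destruct (Rlt_le_dec a b); auto.
  assert (rpow b c <= rpow a c) by (apply rpow_le; lra). lra.
Qed.

Lemma rpow_eq0 a c : 0 <= a -> rpow a c = 0 -> a = 0.
Proof.
  intros [Ha|Ha] H; auto. pose proof (rpow_gt0 a c Ha). lra.
Qed.

Lemma rpow_le1 a c : 0 <= a <= 1 -> 0 <= c -> rpow a c <= 1.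
Proof. intros. rewrite <- (rpow_one c). apply rpow_le; lra. Qed.

Lemma rpow_ge_self a c : 1 <= a -> 1 <= c -> a <= rpow a c.
Proof.
  intros Ha Hc. rewrite rpow_pos by lra. rewrite <- (Rpower_1 a) at 1 by lra.
  apply Rle_Rpower; lra.
Qed.

Lemma rpow_split a c : 0 <= a -> rpow a c = rpow a (c - 1) * a.
Proof.
  intros Ha. replace c with ((c - 1) + 1) at 1 by ring. rewrite rpow_plus by auto.
  rewrite rpow_1; auto.
Qed.

Lemma bernoulli s p : 0 < s -> 1 <= p -> 1 + p * (s - 1) <= rpow s p.
Proof.
  intros Hs Hp. rewrite rpow_split by lra. rewrite rpow_pos by auto.
  unfold Rpower. pose proof (exp_ineq1_le ((p - 1) * ln s)) as H1.
  pose proof (exp_ineq1_le (- ln s)) as H2. rewrite exp_Ropp, exp_ln in H2 by auto.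
  assert (H3 : s * ln s >= s - 1).
  { assert (s * (1 + - ln s) <= s * / s) by (apply Rmult_le_compat_l; lra).
    rewrite Rinv_r in H by lra. nra. }
  assert (exp ((p - 1) * ln s) * s >= (1 + (p - 1) * ln s) * s) by nra.
  nra.
Qed.

Lemma holder_term (p m ph a : R) : 1 < p -> 0 < m -> 0 <= ph -> 0 <= a ->
  rpow ph p * rpow m p + p * rpow m (p - 1) * (rpow ph (p - 1) * a - rpow ph p * m)
  <= rpow a p.
Proof.
  intros Hp Hm [Hph|Hph] [Ha|Ha].
  - pose proof (bernoulli (a / (ph * m)) p) as B.
    assert (Hpm : 0 < ph * m) by nra.
    assert (Hs : 0 < a / (ph * m)) by (apply Rdiv_lt_0_compat; auto).
    specialize (B Hs (Rlt_le _ _ Hp)).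
    assert (E1 : a = (a / (ph * m)) * (ph * m)) by (field; lra).
    assert (Hq : 0 < rpow (ph * m) p) by (apply rpow_gt0; auto).
    assert (B2 : (1 + p * (a / (ph * m) - 1)) * rpow (ph * m) p <= rpow a p).
    { replace (rpow a p) with (rpow (a / (ph * m)) p * rpow (ph * m) p).
      apply Rmult_le_compat_r; lra.
      rewrite <- rpow_mult by lra. f_equal. field. lra. }
    rewrite (rpow_mult ph m) in B2 by lra.
    rewrite (rpow_split ph p) in * by lra. rewrite (rpow_split m p) in * by lra.
    set (u := rpow ph (p - 1)) in *. set (v := rpow m (p - 1)) in *.
    replace ((1 + p * (a / (ph * m) - 1)) * (u * ph * (v * m))) with
      (u * ph * (v * m) + p * (u * v * a - u * ph * (v * m))) in B2 by (field; lra).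
    nra.
  - subst. rewrite rpow_0. rewrite (rpow_split ph p) by lra.
    rewrite (rpow_split m p) by lra.
    assert (0 < rpow ph (p - 1)) by (apply rpow_gt0; auto).
    assert (0 < rpow m (p - 1)) by (apply rpow_gt0; auto).
    assert (0 < rpow ph (p - 1) * ph * (rpow m (p - 1) * m)) by
      (repeat apply Rmult_lt_0_compat; auto).
    nra.
  - subst. rewrite !rpow_0. pose proof (rpow_nonneg a p). nra.
  - subst. rewrite !rpow_0. nra.
Qed.

Lemma holder {T} (p : R) (K : list T) (ph a : T -> R) : 1 < p ->
  (forall i, 0 <= ph i) -> (forall i, 0 <= a i) ->
  lsum K (fun i => rpow (ph i) p) <= 1 ->
  rpow (lsum K (fun i => rpow (ph i) (p - 1) * a i)) p <= lsum K (fun i => rpow (a i) p).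
Proof.
  intros Hp Hph Ha HW.
  set (m := lsum K (fun i => rpow (ph i) (p - 1) * a i)).
  assert (Hm0 : 0 <= m).
  { apply lsum_nonneg. intros. pose proof (rpow_nonneg (ph i) (p-1)). pose proof (Ha i). nra. }
  destruct Hm0 as [Hm|Hm].
  - assert (H := lsum_le K _ _ (fun i _ => holder_term p m (ph i) (a i) Hp Hm (Hph i) (Ha i))).
    rewrite lsum_plus, lsum_mult_l in H.
    rewrite (lsum_ext_in K (fun i => rpow (ph i) p * rpow m p)
      (fun i => rpow m p * rpow (ph i) p)) in H by (intros; ring).
    rewrite lsum_mult_l in H.
    rewrite (lsum_ext_in K (fun i => rpow (ph i) (p - 1) * a i - rpow (ph i) p * m)
       (fun i => rpow (ph i) (p - 1) * a i + (- m) * rpow (ph i) p)) in H by (intros; ring).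
    rewrite lsum_plus, lsum_mult_l in H. fold m in H.
    set (W := lsum K (fun i => rpow (ph i) p)) in *.
    assert (HW0 : 0 <= W) by (apply lsum_nonneg; intros; apply rpow_nonneg).
    rewrite (rpow_split m p) in H |- * by lra.
    assert (0 < rpow m (p - 1)) by (apply rpow_gt0; auto).
    assert (0 <= rpow m (p - 1) * m * (p - 1) * (1 - W)).
    { repeat apply Rmult_le_pos; nra. }
    nra.
  - rewrite <- Hm, rpow_0. apply lsum_nonneg. intros; apply rpow_nonneg.
Qed.

Definition sums {T : Type} (g : T -> R) : R -> Prop :=
  fun s => exists L : list T, NoDup L /\ s = lsum L g.
Definition bnd {T : Type} (g : T -> R) (B : R) : Prop :=
  forall L : list T, NoDup L -> lsum L g <= B.
Definition SS {T : Type} (g : T -> R) : R := Rsup (sums g).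

Lemma Rsup_lub (A : R -> Prop) : (exists m, is_lub A m) -> is_lub A (Rsup A).
Proof. intros H. unfold Rsup. apply epsilon_spec. exact H. Qed.

Lemma lub_unique (A : R -> Prop) m1 m2 : is_lub A m1 -> is_lub A m2 -> m1 = m2.
Proof. intros [H1 H1'] [H2 H2']. apply Rle_antisym; auto. Qed.

Lemma Rsup_eq (A : R -> Prop) m : is_lub A m -> Rsup A = m.
Proof. intros H. apply (lub_unique A); auto. apply Rsup_lub. eauto. Qed.

Lemma SS_lub {T} (g : T -> R) B : bnd g B -> is_lub (sums g) (SS g).
Proof.
  intros H. apply Rsup_lub. destruct (completeness (sums g)) as [m Hm].
  - exists B. intros s [L [HL ->]]. auto.
  - exists 0, []. split. constructor. reflexivity.
  - eauto.
Qed.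

Lemma SS_ge {T} (g : T -> R) B L : bnd g B -> NoDup L -> lsum L g <= SS g.
Proof. intros H HL. destruct (SS_lub g B H) as [H1 _]. apply H1. exists L; auto. Qed.

Lemma SS_le {T} (g : T -> R) B : bnd g B -> SS g <= B.
Proof. intros H. destruct (SS_lub g B H) as [_ H2]. apply H2. intros s [L [HL ->]]; auto. Qed.

Lemma SS_nonneg {T} (g : T -> R) B : bnd g B -> 0 <= SS g.
Proof. intros H. apply (SS_ge g B []) in H. simpl in H. auto. constructor. Qed.

Lemma bnd_SS {T} (g : T -> R) B : bnd g B -> bnd g (SS g).
Proof. intros H L HL. eapply SS_ge; eauto. Qed.

Lemma bnd_mono {T} (g : T -> R) B B' : bnd g B -> B <= B' -> bnd g B'.
Proof. intros H H' L HL. specialize (H L HL). lra. Qed.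

Lemma nodup_incl_l {T} (L1 L2 : list T) : incl L1 (nodup eqd (L1 ++ L2)).
Proof. intros x Hx. apply nodup_In. apply in_or_app; auto. Qed.
Lemma nodup_incl_r {T} (L1 L2 : list T) : incl L2 (nodup eqd (L1 ++ L2)).
Proof. intros x Hx. apply nodup_In. apply in_or_app; auto. Qed.

Lemma SS_tail {T} (g : T -> R) B eps : bnd g B -> (forall x, 0 <= g x) -> 0 < eps ->
  exists F : list T, NoDup F /\
    forall L, NoDup L -> (forall y, In y L -> ~ In y F) -> lsum L g <= eps.
Proof.
  intros Hb Hg He.
  assert (exists F, NoDup F /\ SS g - eps < lsum F g) as [F [HF HF2]].
  { apply NNPP. intros Hn.
    assert (SS g <= SS g - eps); [|lra].
    apply (SS_le g). intros L HL. destruct (Rle_lt_dec (lsum L g) (SS g - eps)); auto.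
    exfalso; apply Hn; eauto. }
  exists F; split; auto. intros L HL Hd.
  assert (HN : NoDup (F ++ L)).
  { apply NoDup_app; auto. intros x Hx Hx'. eapply Hd; eauto. }
  pose proof (SS_ge g B (F ++ L) Hb HN). rewrite lsum_app in H. lra.
Qed.

Lemma SS_superadd {T J} (JL : list J) (g : J -> T -> R) H :
  (forall j x, 0 <= g j x) -> (forall j, exists B, bnd (g j) B) ->
  (forall XL, NoDup XL -> lsum XL (fun x => lsum JL (fun j => g j x)) <= H) ->
  lsum JL (fun j => SS (g j)) <= H.
Proof.
  revert H. induction JL as [|j JL IH]; intros H Hg Hb Hs.
  - simpl. specialize (Hs [] (NoDup_nil _)). simpl in Hs. auto.
  - simpl.
    assert (Hc : forall XL1, NoDup XL1 ->
      lsum JL (fun j => SS (g j)) <= H - lsum XL1 (g j)).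
    { intros XL1 H1. apply IH; auto. intros XL2 H2.
      set (XL := nodup eqd (XL1 ++ XL2)).
      assert (NX : NoDup XL) by apply NoDup_nodup.
      specialize (Hs XL NX). simpl in Hs. rewrite lsum_plus in Hs.
      assert (lsum XL1 (g j) <= lsum XL (g j)).
      { apply lsum_sub; auto. apply nodup_incl_l. }
      assert (lsum XL2 (fun x => lsum JL (fun j => g j x)) <=
              lsum XL (fun x => lsum JL (fun j => g j x))).
      { apply lsum_sub; auto. apply nodup_incl_r. intros; apply lsum_nonneg; auto. }
      lra. }
    destruct (Hb j) as [B HB].
    assert (SS (g j) <= H - lsum JL (fun j => SS (g j))).
    { apply SS_le. intros L HL. specialize (Hc L HL). lra. }
    lra.
Qed.

Section EAlg.
Variable E : Banach.
Notation "0E" := (bzero E).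
Notation "a +E b" := (badd E a b) (at level 50, left associativity).
Notation "-E a" := (bopp E a) (at level 35).
Notation "c *E a" := (bscal E c a) (at level 40).
Notation nrm := (bnorm E).

Lemma badd_0r (x : E) : x +E 0E = x.
Proof. rewrite badd_comm. apply badd_0. Qed.

Lemma badd_cancel (a b : E) : a +E b = a -> b = 0E.
Proof.
  intros H. transitivity ((-E a) +E (a +E b)).
  - rewrite badd_assoc, (badd_comm E (-E a) a), badd_opp, badd_0; auto.
  - rewrite H, badd_comm, badd_opp; auto.
Qed.

Lemma bscal_0l (x : E) : 0 *E x = 0E.
Proof.
  apply (badd_cancel (0 *E x)). rewrite <- bscal_distr_r. f_equal. ring.
Qed.

Lemma bscal_0r (a : R) : a *E 0E = 0E.
Proof.
  apply (badd_cancel (a *E 0E)). rewrite <- bscal_distr_l. f_equal. apply badd_0.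
Qed.

Lemma bopp_scal (x : E) : -E x = (-1) *E x.
Proof.
  assert (H : x +E ((-1) *E x) = 0E).
  { rewrite <- (bscal_1 E x) at 1. rewrite <- bscal_distr_r.
    replace (1 + -1) with 0 by ring. apply bscal_0l. }
  transitivity ((-E x) +E (x +E ((-1) *E x))).
  - rewrite H; symmetry; apply badd_0r.
  - rewrite badd_assoc, (badd_comm E (-E x) x), badd_opp, badd_0; auto.
Qed.

Lemma bnorm_0 : nrm 0E = 0.
Proof. rewrite <- (bscal_0l 0E). rewrite bnorm_scal. rewrite Rabs_R0. ring. Qed.

Lemma bnorm_opp (x : E) : nrm (-E x) = nrm x.
Proof. rewrite bopp_scal, bnorm_scal. replace (Rabs (-1)) with 1. ring. rewrite Rabs_left by lra; ring. Qed.

Lemma bopp_0 : -E 0E = 0E.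
Proof. rewrite bopp_scal. apply bscal_0r. Qed.

Lemma bsub_add (a b : E) : (a +E -E b) +E b = a.
Proof. rewrite <- badd_assoc. rewrite (badd_comm E (-E b)). rewrite badd_opp. apply badd_0r. Qed.

Lemma bscal_add_r (a b : R) (x : E) : (a + b) *E x = a *E x +E b *E x.
Proof. apply bscal_distr_r. Qed.

Lemma bnorm_eq0_iff (x : E) : nrm x = 0 <-> x = 0E.
Proof. split. apply bnorm_eq0. intros ->. apply bnorm_0. Qed.

Lemma gsum_norm {T} (L : list T) (g : T -> E) :
  nrm (gsum (badd E) (bzero E) L g) <= lsum L (fun i => nrm (g i)).
Proof.
  induction L; simpl. rewrite bnorm_0; lra.
  pose proof (bnorm_triangle E (g a) (gsum (badd E) (bzero E) L g)). lra.
Qed.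

Lemma gsum_scal {T} (L : list T) (g : T -> E) c :
  c *E (gsum (badd E) (bzero E) L g) = gsum (badd E) (bzero E) L (fun i => c *E (g i)).
Proof.
  induction L; simpl. apply bscal_0r. rewrite bscal_distr_l. now rewrite IHL.
Qed.

Lemma gsum_scal_r {T} (L : list T) (c : T -> R) (v : E) :
  (lsum L c) *E v = gsum (badd E) (bzero E) L (fun i => (c i) *E v).
Proof.
  induction L; simpl. apply bscal_0l. rewrite bscal_distr_r. now rewrite IHL.
Qed.

Lemma Egsum_add {T} (L : list T) (f g : T -> E) :
  gsum (badd E) (bzero E) L (fun i => f i +E g i) =
  gsum (badd E) (bzero E) L f +E gsum (badd E) (bzero E) L g.
Proof. apply gsum_add; auto using badd_assoc, badd_comm, badd_0. Qed.

Lemma Egsum_reindex {T} (L1 L2 : list T) (g : T -> E) : NoDup L1 -> NoDup L2 ->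
  (forall i, g i <> 0E -> (In i L1 <-> In i L2)) ->
  gsum (badd E) (bzero E) L1 g = gsum (badd E) (bzero E) L2 g.
Proof. apply gsum_reindex; auto using badd_assoc, badd_comm, badd_0. Qed.

Lemma Egsum_zero {T} (L : list T) (g : T -> E) : (forall i, In i L -> g i = 0E) ->
  gsum (badd E) (bzero E) L g = 0E.
Proof. apply gsum_zero. intros; apply badd_0. Qed.

Lemma Egsum_ext_in {T} (L : list T) (g1 g2 : T -> E) : (forall i, In i L -> g1 i = g2 i) ->
  gsum (badd E) (bzero E) L g1 = gsum (badd E) (bzero E) L g2.
Proof. apply gsum_ext_in. Qed.

Lemma Egsum_swap {A B} (L1 : list A) (L2 : list B) (h : A -> B -> E) :
  gsum (badd E) (bzero E) L1 (fun x => gsum (badd E) (bzero E) L2 (fun i => h x i)) =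
  gsum (badd E) (bzero E) L2 (fun i => gsum (badd E) (bzero E) L1 (fun x => h x i)).
Proof. apply gsum_swap; auto using badd_assoc, badd_comm, badd_0. Qed.

End EAlg.

Section LP.
Variables (X : MetricSpace) (E : Banach) (p : R).
Hypothesis hp : 1 < p.
Notation "0E" := (bzero E).
Notation "a +E b" := (badd E a b) (at level 50, left associativity).
Notation "-E a" := (bopp E a) (at level 35).
Notation "c *E a" := (bscal E c a) (at level 40).
Notation nrm := (bnorm E).

Definition nf (f : X -> E) : X -> R := fun x => rpow (nrm (f x)) p.
Definition zf : X -> E := fun _ => 0E.

Lemma nf_nonneg f x : 0 <= nf f x.
Proof. apply rpow_nonneg. Qed.

Lemma is_lp_bnd f : is_lp X E p f <-> exists B, bnd (nf f) B.
Proof.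
  split.
  - intros [M HM]. exists M. intros L HL. apply HM. exists L; auto.
  - intros [B HB]. exists B. intros s [L [HL ->]]. apply HB; auto.
Qed.

Lemma lp_norm_SS f : lp_norm X E p f = rpow (SS (nf f)) (/ p).
Proof. reflexivity. Qed.

Lemma nf_pt f x B : bnd (nf f) B -> nf f x <= SS (nf f).
Proof.
  intros H. pose proof (SS_ge (nf f) B [x] H). simpl in H0.
  rewrite Rplus_0_r in H0. apply H0. constructor. auto. constructor.
Qed.

Lemma nf_zf x : nf zf x = 0.
Proof. unfold nf, zf. rewrite bnorm_0. apply rpow_0. Qed.

Lemma bnd_zf : bnd (nf zf) 0.
Proof. intros L _. rewrite lsum_zero; [lra|]. intros; apply nf_zf. Qed.

Lemma SS_zf : SS (nf zf) = 0.
Proof.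
  apply Rle_antisym. apply SS_le, bnd_zf. apply (SS_nonneg _ 0), bnd_zf.
Qed.

Lemma lp_zf : is_lp X E p zf.
Proof. apply is_lp_bnd. exists 0; apply bnd_zf. Qed.

Lemma lp_norm_zf : lp_norm X E p zf = 0.
Proof. rewrite lp_norm_SS, SS_zf. apply rpow_0. Qed.

Lemma nf_fscal a f x : nf (fscal X E a f) x = rpow (Rabs a) p * nf f x.
Proof. unfold nf, fscal. rewrite bnorm_scal. apply rpow_mult. apply Rabs_pos. apply bnorm_nonneg. Qed.

Lemma bnd_dom g h B : (forall x, nf g x <= h x) -> bnd h B -> bnd (nf g) B.
Proof. intros H1 H2 L HL. specialize (H2 L HL). pose proof (lsum_le L _ _ (fun x _ => H1 x)). lra. Qed.

Lemma bnd_scal (h : X -> R) k B : 0 <= k -> bnd h B -> bnd (fun x => k * h x) (k * B).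
Proof. intros Hk H L HL. rewrite lsum_mult_l. apply Rmult_le_compat_l; auto. Qed.

Lemma SS_scal (h : X -> R) k B : 0 <= k -> (forall x, 0 <= h x) -> bnd h B ->
  SS (fun x => k * h x) = k * SS h.
Proof.
  intros Hk Hh HB. apply Rsup_eq. split.
  - intros s [L [HL ->]]. rewrite lsum_mult_l. apply Rmult_le_compat_l; auto.
    eapply SS_ge; eauto.
  - intros b Hb. destruct Hk as [Hk|Hk].
    + assert (SS h <= b / k).
      { apply SS_le. intros L HL. assert (k * lsum L h <= b).
        { rewrite <- lsum_mult_l. apply Hb. exists L; auto. }
        apply (Rmult_le_reg_l k); auto. replace (k * (b / k)) with b by (field; lra). lra. }
      assert (k * SS h <= k * (b / k)) by (apply Rmult_le_compat_l; lra).
      replace (k * (b / k)) with b in H0 by (field; lra). lra.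
    + subst. rewrite Rmult_0_l. apply Hb. exists []. split. constructor. simpl. ring.
Qed.

Lemma SS_nf_fscal a f B : bnd (nf f) B ->
  SS (nf (fscal X E a f)) = rpow (Rabs a) p * SS (nf f).
Proof.
  intros HB. rewrite <- (SS_scal (nf f) (rpow (Rabs a) p) B); auto.
  - unfold SS. f_equal. extensionality s. unfold sums. f_equal.
    extensionality L. f_equal. f_equal. apply lsum_ext_in. intros; apply nf_fscal.
  - apply rpow_nonneg.
  - apply nf_nonneg.
Qed.

Lemma SS_nf_zero f B : bnd (nf f) B -> SS (nf f) = 0 -> f = zf.
Proof.
  intros HB H0. extensionality x. unfold zf.
  pose proof (nf_pt f x B HB). pose proof (nf_nonneg f x).
  assert (H2 : nf f x = 0) by lra. unfold nf in H2.
  pose proof (rpow_eq0 _ p (bnorm_nonneg E (f x)) H2). apply bnorm_eq0; auto.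
Qed.

Lemma rpow_Rinv t c : 0 < t -> rpow (/ t) c = / rpow t c.
Proof.
  intros Ht. rewrite !rpow_pos; auto. 2: apply Rinv_0_lt_compat; auto.
  unfold Rpower. rewrite ln_Rinv by auto. rewrite <- exp_Ropp. f_equal. ring.
Qed.

Lemma lub_ex (A : R -> Prop) : bound A -> (exists x, A x) -> exists m, is_lub A m.
Proof. intros H1 H2. destruct (completeness A H1 H2) as [m Hm]; eauto. Qed.

Definition Pb (C : Op X E) (c : R) : Prop :=
  forall g, is_lp X E p g -> bnd (nf (C g)) (rpow c p * SS (nf g)).

Definition OpSet (C : Op X E) : R -> Prop :=
  fun s => exists f, is_lp X E p f /\ lp_norm X E p f <= 1 /\ s = lp_norm X E p (C f).

Lemma opnorm_def (C : Op X E) : opnorm p C = Rsup (OpSet C).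
Proof. reflexivity. Qed.

Lemma SS_le_1 f B : bnd (nf f) B -> lp_norm X E p f <= 1 -> SS (nf f) <= 1.
Proof.
  intros HB H. rewrite lp_norm_SS in H.
  apply (rpow_le_inv _ _ (/ p)). eapply SS_nonneg; eauto. lra.
  apply Rinv_0_lt_compat; lra. rewrite rpow_one. auto.
Qed.

Lemma opnorm_le (C : Op X E) c : 0 <= c -> Pb C c -> opnorm p C <= c.
Proof.
  intros Hc HP. rewrite opnorm_def.
  assert (Hub : forall s, OpSet C s -> s <= c).
  { intros s [f [Hf [Hn ->]]]. apply is_lp_bnd in Hf as [B HB].
    specialize (HP f (proj2 (is_lp_bnd f) (ex_intro _ B HB))).
    assert (H1 : SS (nf (C f)) <= rpow c p * SS (nf f)) by (apply SS_le; auto).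
    assert (H2 : SS (nf f) <= 1) by (eapply SS_le_1; eauto).
    assert (H3 : 0 <= SS (nf f)) by (eapply SS_nonneg; eauto).
    assert (H4 : 0 <= SS (nf (C f))) by (eapply SS_nonneg; eauto).
    pose proof (rpow_nonneg c p).
    rewrite lp_norm_SS. rewrite <- (rpow_inv c p) by lra.
    apply rpow_le. split; auto. nra. left; apply Rinv_0_lt_compat; lra. }
  assert (Hl : is_lub (OpSet C) (Rsup (OpSet C))).
  { apply Rsup_lub. apply lub_ex. exists c; intros s Hs; auto.
    exists (lp_norm X E p (C zf)), zf. split. apply lp_zf. rewrite lp_norm_zf. split; auto; lra. }
  apply Hl. intros s Hs; auto.
Qed.

Lemma lin_zero (C : Op X E) : bounded_op p C -> C zf = zf.
Proof.
  intros [_ [Hl _]]. extensionality x. unfold zf at 2.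
  specialize (Hl zf zf 1 lp_zf lp_zf x).
  assert (fadd X E zf (fscal X E 1 zf) = zf).
  { extensionality y. unfold fadd, fscal, zf. rewrite bscal_1. apply badd_0. }
  rewrite H in Hl. rewrite bscal_1 in Hl. symmetry in Hl. apply badd_cancel in Hl. auto.
Qed.

Lemma lin_scal (C : Op X E) a g : bounded_op p C -> is_lp X E p g ->
  C (fscal X E a g) = fscal X E a (C g).
Proof.
  intros HC Hg. pose proof (lin_zero C HC) as Z. destruct HC as [_ [Hl _]].
  extensionality x. specialize (Hl zf g a lp_zf Hg x).
  assert (fadd X E zf (fscal X E a g) = fscal X E a g).
  { extensionality y. unfold fadd, fscal, zf. apply badd_0. }
  rewrite H in Hl. rewrite Hl, Z. unfold zf, fscal. apply badd_0.
Qed.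

Lemma lp_fscal a g : is_lp X E p g -> is_lp X E p (fscal X E a g).
Proof.
  intros Hg. apply is_lp_bnd in Hg as [B HB]. apply is_lp_bnd.
  exists (rpow (Rabs a) p * B). intros L HL.
  rewrite (lsum_ext_in L _ (fun x => rpow (Rabs a) p * nf g x)) by (intros; apply nf_fscal).
  rewrite lsum_mult_l. apply Rmult_le_compat_l. apply rpow_nonneg. auto.
Qed.

Lemma opset_bounded (C : Op X E) : bounded_op p C -> exists c, forall s, OpSet C s -> s <= c.
Proof.
  intros [_ [_ [C0 HC0]]]. exists (Rmax C0 0). intros s [f [Hf [Hn ->]]].
  specialize (HC0 f Hf). assert (0 <= lp_norm X E p f) by (rewrite lp_norm_SS; apply rpow_nonneg).
  destruct (Rle_dec 0 C0).
  - rewrite Rmax_left by auto. nra.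
  - rewrite Rmax_right by lra. nra.
Qed.

Lemma opnorm_lub (C : Op X E) : bounded_op p C -> is_lub (OpSet C) (opnorm p C).
Proof.
  intros HC. rewrite opnorm_def. apply Rsup_lub. apply lub_ex.
  destruct (opset_bounded C HC) as [c Hc]. exists c; auto.
  exists (lp_norm X E p (C zf)), zf. split. apply lp_zf. rewrite lp_norm_zf. split; auto; lra.
Qed.

Lemma opnorm_nonneg (C : Op X E) : bounded_op p C -> 0 <= opnorm p C.
Proof.
  intros HC. destruct (opnorm_lub C HC) as [H _].
  assert (OpSet C (lp_norm X E p (C zf))).
  { exists zf. split. apply lp_zf. rewrite lp_norm_zf. split; auto; lra. }
  apply H in H0. rewrite lp_norm_SS in H0. pose proof (rpow_nonneg (SS (nf (C zf))) (/p)). lra.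
Qed.

Lemma opnorm_Pb (C : Op X E) : bounded_op p C -> Pb C (opnorm p C).
Proof.
  intros HC g Hg. pose proof (opnorm_lub C HC) as [Hub _].
  pose proof Hg as Hg'. apply is_lp_bnd in Hg' as [B HB].
  assert (Hs0 : 0 <= SS (nf g)) by (eapply SS_nonneg; eauto).
  destruct Hs0 as [Hs|Hs].
  - set (s := SS (nf g)) in *. set (t := rpow s (/ p)).
    assert (Ht : 0 < t) by (apply rpow_gt0; auto).
    assert (Htp : rpow t p = s).
    { unfold t. rewrite rpow_rpow by lra. rewrite Rinv_l by lra. apply rpow_1; lra. }
    set (h := fscal X E (/ t) g).
    assert (Hh : is_lp X E p h) by (apply lp_fscal; auto).
    assert (HSh : SS (nf h) = 1).
    { unfold h. rewrite (SS_nf_fscal _ _ B HB). rewrite Rabs_right.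
      rewrite rpow_Rinv by auto. rewrite Htp. fold s. field. lra.
      left; apply Rinv_0_lt_compat; auto. }
    assert (Hnh : lp_norm X E p h <= 1).
    { rewrite lp_norm_SS, HSh, rpow_one; lra. }
    assert (HC1 : lp_norm X E p (C h) <= opnorm p C).
    { apply Hub. exists h; auto. }
    assert (HCh : C h = fscal X E (/ t) (C g)) by (apply lin_scal; auto).
    destruct HC as [Hlp [Hlin Hbd]].
    assert (HCg : is_lp X E p (C g)) by auto.
    apply is_lp_bnd in HCg as [B2 HB2].
    intros L HL.
    assert (E1 : lsum L (nf (C g)) = s * lsum L (nf (C h))).
    { rewrite HCh. rewrite (lsum_ext_in L (nf (fscal X E (/ t) (C g)))
          (fun x => / s * nf (C g) x)).
      rewrite lsum_mult_l. field. lra.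
      intros x _. rewrite nf_fscal. rewrite Rabs_right. rewrite rpow_Rinv by auto.
      rewrite Htp. auto. left; apply Rinv_0_lt_compat; auto. }
    rewrite E1. rewrite Rmult_comm. apply Rmult_le_compat_r; [lra|].
    assert (HBh : bnd (nf (C h)) (SS (nf (C h)))).
    { rewrite HCh. intros L' HL'. eapply SS_ge; auto.
      apply (bnd_dom _ (fun x => / s * nf (C g) x) (/ s * B2)).
      intros x. rewrite nf_fscal, Rabs_right, rpow_Rinv, Htp by (auto; left; apply Rinv_0_lt_compat; auto). lra.
      apply bnd_scal; auto. left; apply Rinv_0_lt_compat; auto. }
    eapply Rle_trans. apply HBh; auto.
    assert (0 <= SS (nf (C h))) by (eapply SS_nonneg; eauto).
    rewrite lp_norm_SS in HC1. rewrite <- (rpow_inv (SS (nf (C h))) (/ p)) by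
      (auto; apply Rinv_neq_0_compat; lra).
    rewrite Rinv_inv. apply rpow_le; [split|]; try lra. apply rpow_nonneg.
  - pose proof (SS_nf_zero g B HB (eq_sym Hs)) as ->.
    rewrite (lin_zero C HC). rewrite <- Hs. rewrite Rmult_0_r. apply bnd_zf.
Qed.

End LP.

Section MOP.
Variables (X : MetricSpace) (E : Banach) (p q : R).
Hypothesis hp : 1 < p.
Hypothesis hq : / p + / q = 1.
Variables (I : Type) (phi : I -> X -> R).
Notation "0E" := (bzero E).
Notation "a +E b" := (badd E a b) (at level 50, left associativity).
Notation "-E a" := (bopp E a) (at level 35).
Notation "c *E a" := (bscal E c a) (at level 40).
Notation nrm := (bnorm E).
Notation Esum := (gsum (badd E) (bzero E)).
Notation nfp := (nf X E p).
Notation zf := (zf X E).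

Definition LxP (x : X) (L : list I) : Prop :=
  NoDup L /\ (forall i, phi i x <> 0 -> In i L) /\ lsum L (fun i => rpow (phi i x) p) = 1.
Definition Lx (x : X) : list I := epsilon (inhabits []) (LxP x).

Definition term (A : Op X E) (f : X -> E) (x : X) (i : I) : E :=
  rpow (phi i x) (p / q) *E A (fmul X E (phi i) f) x.

Definition Mop (A : Op X E) : Op X E :=
  fun f x => Esum (Lx x) (term A f x).

Lemma pq : p / q = p - 1.
Proof.
  unfold Rdiv. assert (/ q = 1 - / p) by lra. rewrite H. field. lra.
Qed.

Hypothesis hpart : metric_p_partition X p phi.

Lemma phi_01 i x : 0 <= phi i x <= 1.
Proof. destruct hpart as [H _]. auto. Qed.

Lemma Lx_spec x : LxP x (Lx x).
Proof.
  unfold Lx. apply epsilon_spec. destruct hpart as [_ [_ [_ H]]]. apply H.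
Qed.

Lemma Lx_nodup x : NoDup (Lx x).
Proof. apply Lx_spec. Qed.
Lemma Lx_in x i : phi i x <> 0 -> In i (Lx x).
Proof. apply Lx_spec. Qed.
Lemma Lx_sum x : lsum (Lx x) (fun i => rpow (phi i x) p) = 1.
Proof. apply Lx_spec. Qed.

Lemma weights_le1 x K : NoDup K -> lsum K (fun i => rpow (phi i x) p) <= 1.
Proof.
  intros HK. rewrite <- (Lx_sum x). apply lsum_incl; auto. apply Lx_nodup.
  intros i _ Hi. apply Lx_in. intros e. rewrite e, rpow_0 in Hi. auto.
  intros; apply rpow_nonneg.
Qed.

Lemma coef_le1 i x : rpow (phi i x) (p / q) <= 1.
Proof. rewrite pq. apply rpow_le1. apply phi_01. lra. Qed.

Lemma nf_fmul i f x : nfp (fmul X E (phi i) f) x = rpow (phi i x) p * nfp f x.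
Proof.
  unfold nf, fmul. rewrite bnorm_scal. rewrite Rabs_right by (apply Rle_ge, phi_01).
  apply rpow_mult. apply phi_01. apply bnorm_nonneg.
Qed.

Lemma nf_fmul_le i f x : nfp (fmul X E (phi i) f) x <= nfp f x.
Proof.
  rewrite nf_fmul. pose proof (rpow_le1 (phi i x) p (phi_01 i x)). pose proof (nf_nonneg X E p f x).
  assert (rpow (phi i x) p <= 1) by (apply H; lra). nra.
Qed.

Lemma lp_fmul i f : is_lp X E p f -> is_lp X E p (fmul X E (phi i) f).
Proof.
  intros H. apply is_lp_bnd in H as [B HB]. apply is_lp_bnd. exists B.
  eapply bnd_dom; eauto. intros; apply nf_fmul_le.
Qed.

Ltac decide_tac :=
  unfold dec; repeat destruct (excluded_middle_informative _); try tauto; try discriminate.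

Lemma Mbound (A : Op X E) c (T : I -> Prop) f (w : X -> R) H :
  0 <= c -> Pb X E p A c -> is_lp X E p f ->
  (forall x K, NoDup K ->
     lsum K (fun i => if dec (T i) then rpow (phi i x) p else 0) * nfp f x <= w x) ->
  bnd w H ->
  bnd (nfp (fun x => Esum (Lx x) (fun i => if dec (T i) then term A f x i else 0E)))
      (rpow c p * H).
Proof.
  intros Hc HP Hf Hw HH XL HXL.
  set (b := fun x i => if dec (T i) then nfp (A (fmul X E (phi i) f)) x else 0).
  assert (Hb0 : forall x i, 0 <= b x i).
  { intros. unfold b. destruct (dec (T i)). apply nf_nonneg. lra. }
  assert (S1 : forall x, nfp (fun x => Esum (Lx x) (fun i => if dec (T i) then term A f x i else 0E)) x
                <= lsum (Lx x) (b x)).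
  { intros x. unfold nf at 1.
    set (ph' := fun i => if dec (T i) then phi i x else 0).
    set (a := fun i => if dec (T i) then nrm (A (fmul X E (phi i) f) x) else 0).
    assert (N1 : nrm (Esum (Lx x) (fun i => if dec (T i) then term A f x i else 0E))
                 <= lsum (Lx x) (fun i => rpow (ph' i) (p - 1) * a i)).
    { eapply Rle_trans. apply gsum_norm. apply lsum_le. intros i _.
      unfold ph', a. destruct (dec (T i)).
      - unfold term. rewrite bnorm_scal, pq. rewrite Rabs_right by (apply Rle_ge, rpow_nonneg). lra.
      - rewrite bnorm_0, rpow_0. lra. }
    eapply Rle_trans. apply rpow_le. split. apply bnorm_nonneg. exact N1. lra.
    eapply Rle_trans. apply holder; auto.
    - intros i; unfold ph'. destruct (dec (T i)). apply phi_01. lra.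
    - intros i; unfold a. destruct (dec (T i)). apply bnorm_nonneg. lra.
    - eapply Rle_trans; [|apply (weights_le1 x (Lx x) (Lx_nodup x))].
      apply lsum_le. intros i _. unfold ph'. destruct (dec (T i)). lra. rewrite rpow_0. apply rpow_nonneg.
    - apply lsum_le. intros i _. unfold a, b. destruct (dec (T i)). unfold nf. lra.
      rewrite rpow_0. lra. }
  set (J := nodup eqd (flat_map Lx XL)).
  assert (NJ : NoDup J) by apply NoDup_nodup.
  assert (S2 : lsum XL (fun x => lsum (Lx x) (b x)) <= lsum XL (fun x => lsum J (b x))).
  { apply lsum_le. intros x Hx. apply lsum_sub; auto. apply Lx_nodup.
    intros i Hi. apply nodup_In. apply in_flat_map. eauto. }
  rewrite lsum_swap in S2.
  set (g := fun i x => if dec (T i) then nfp (fmul X E (phi i) f) x else 0).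
  assert (Hg0 : forall i x, 0 <= g i x).
  { intros. unfold g. destruct (dec (T i)). apply nf_nonneg. lra. }
  apply is_lp_bnd in Hf as [Bf HBf].
  assert (Hgb : forall i, bnd (g i) Bf).
  { intros i L HL. eapply Rle_trans; [|apply (HBf L HL)]. apply lsum_le. intros x _.
    unfold g. destruct (dec (T i)). apply nf_fmul_le. apply nf_nonneg. }
  assert (S3 : forall i, lsum XL (fun x => b x i) <= rpow c p * SS (g i)).
  { intros i. unfold b. destruct (dec (T i)) eqn:Ht.
    - assert (Hgi : g i = nfp (fmul X E (phi i) f)).
      { extensionality x. unfold g. rewrite Ht. auto. }
      rewrite Hgi. apply HP; auto. apply lp_fmul. apply is_lp_bnd. eauto.
    - rewrite lsum_zero by auto. pose proof (rpow_nonneg c p).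
      pose proof (SS_nonneg (g i) Bf (Hgb i)). nra. }
  assert (S4 : lsum J (fun i => SS (g i)) <= H).
  { apply SS_superadd; auto. intros i; exists Bf; auto.
    intros XL' HXL'. eapply Rle_trans; [|apply (HH XL' HXL')]. apply lsum_le. intros x _.
    eapply Rle_trans; [|apply (Hw x J NJ)].
    rewrite Rmult_comm. rewrite <- lsum_mult_l. apply lsum_le. intros i _.
    unfold g. destruct (dec (T i)). rewrite nf_fmul. lra. lra. }
  eapply Rle_trans. apply lsum_le. intros x _. apply S1.
  eapply Rle_trans. apply S2.
  eapply Rle_trans. apply lsum_le. intros i _. apply S3.
  rewrite lsum_mult_l. apply Rmult_le_compat_l. apply rpow_nonneg. auto.
Qed.


Lemma Mop_Pb (A : Op X E) c : 0 <= c -> Pb X E p A c -> Pb X E p (Mop A) c.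
Proof.
  intros Hc HP f Hf.
  assert (Heq : Mop A f = fun x => Esum (Lx x) (fun i => if dec True then term A f x i else 0E)).
  { extensionality x. unfold Mop. apply Egsum_ext_in. intros. rewrite decT; auto. }
  rewrite Heq. apply (Mbound A c (fun _ => True) f (nfp f)); auto.
  - intros x K HK. rewrite <- (Rmult_1_l (nfp f x)) at 2. apply Rmult_le_compat_r. apply nf_nonneg.
    eapply Rle_trans; [|apply (weights_le1 x K HK)]. apply lsum_le. intros. rewrite decT; auto; lra.
  - apply is_lp_bnd in Hf as [B HB]. eapply bnd_SS; eauto.
Qed.

Lemma bounded_from_Pb (C : Op X E) c : 0 <= c -> Pb X E p C c ->
  (forall f g a, is_lp X E p f -> is_lp X E p g ->
      forall x, C (fadd X E f (fscal X E a g)) x = C f x +E a *E C g x) ->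
  bounded_op p C.
Proof.
  intros Hc HP Hl. split; [|split]; auto.
  - intros f Hf. apply is_lp_bnd. eexists. apply HP; auto.
  - exists c. intros f Hf. pose proof (HP f Hf) as H1. pose proof Hf as Hf'.
    apply is_lp_bnd in Hf' as [B HB].
    rewrite !lp_norm_SS. assert (0 <= SS (nfp f)) by (eapply SS_nonneg; eauto).
    assert (0 <= SS (nfp (C f))) by (eapply SS_nonneg; eauto).
    eapply Rle_trans. apply rpow_le. split. auto. apply SS_le. apply H1.
    left; apply Rinv_0_lt_compat; lra.
    rewrite rpow_mult by (auto; apply rpow_nonneg). rewrite rpow_inv by lra. lra.
Qed.

Lemma fmul_lin i f g a : fmul X E (phi i) (fadd X E f (fscal X E a g)) =
  fadd X E (fmul X E (phi i) f) (fscal X E a (fmul X E (phi i) g)).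
Proof.
  extensionality y. unfold fmul, fadd, fscal. rewrite bscal_distr_l, !bscal_assoc.
  rewrite Rmult_comm. auto.
Qed.

Lemma scal_lin (r a : R) (u v : E) : r *E (u +E a *E v) = r *E u +E a *E (r *E v).
Proof. rewrite bscal_distr_l, !bscal_assoc, Rmult_comm. auto. Qed.

Lemma Mop_linf (A : Op X E) : bounded_op p A ->
  forall f g a, is_lp X E p f -> is_lp X E p g ->
  forall x, Mop A (fadd X E f (fscal X E a g)) x = Mop A f x +E a *E Mop A g x.
Proof.
  intros [_ [HA _]] f g a Hf Hg x. unfold Mop. rewrite gsum_scal. rewrite <- Egsum_add.
  apply Egsum_ext_in. intros i _. unfold term. rewrite fmul_lin.
  rewrite HA by (try apply lp_fscal; apply lp_fmul; auto). apply scal_lin.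
Qed.

Lemma Mop_bounded (A : Op X E) : bounded_op p A -> bounded_op p (Mop A).
Proof.
  intros HA. apply (bounded_from_Pb _ (opnorm p A)).
  apply opnorm_nonneg; auto. apply Mop_Pb. apply opnorm_nonneg; auto. apply opnorm_Pb; auto; lra.
  apply Mop_linf; auto.
Qed.

Lemma delta_zero_fmul i y e : phi i y = 0 -> fmul X E (phi i) (delta X E y e) = zf.
Proof.
  intros H. extensionality z. unfold fmul, delta, zf.
  destruct (excluded_middle_informative (z = y)). subst. rewrite H. apply bscal_0l.
  apply bscal_0r.
Qed.

Lemma Mop_band (A : Op X E) : bounded_op p A ->
  exists R0, forall x y e, R0 < Defs.dist X x y -> entry (Mop A) x y e = 0E.
Proof.
  intros HA. destruct hpart as [_ [_ [[D HD] _]]]. exists D. intros x y e Hd.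
  unfold entry, Mop. apply Egsum_zero. intros i _. unfold term.
  destruct (Req_dec (phi i x) 0) as [H0|H0].
  - rewrite H0, rpow_0. apply bscal_0l.
  - assert (phi i y = 0). { apply NNPP. intros H1. specialize (HD i x y H0 H1). lra. }
    rewrite delta_zero_fmul by auto. rewrite (lin_zero X E p A HA). unfold zf. apply bscal_0r.
Qed.

Lemma opnorm_osub_self (C : Op X E) : opnorm p (osub C C) <= 0.
Proof.
  apply opnorm_le; auto. lra. intros g Hg.
  assert (osub C C g = zf).
  { extensionality x. unfold osub, fsub, zf. apply badd_opp. }
  rewrite H. rewrite rpow_0, Rmult_0_l. apply bnd_zf.
Qed.

Lemma in_Ap_Mop (A : Op X E) : bounded_op p A -> in_Ap p (Mop A).
Proof.
  intros HA. split. apply Mop_bounded; auto.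
  intros eps He. exists (Mop A). split.
  - split. apply Mop_bounded; auto. apply Mop_band; auto.
  - pose proof (opnorm_osub_self (Mop A)). lra.
Qed.

Lemma Mop_linA (A B : Op X E) a f x :
  Mop (oadd A (oscal a B)) f x = Mop A f x +E a *E Mop B f x.
Proof.
  unfold Mop. rewrite gsum_scal. rewrite <- Egsum_add.
  apply Egsum_ext_in. intros i _. unfold term, oadd, oscal, fadd, fscal. apply scal_lin.
Qed.

Lemma Mop_id : Mop (fun f => f) = (fun f => f).
Proof.
  extensionality f. extensionality x. unfold Mop, term, fmul.
  rewrite (Egsum_ext_in _ _ _ (fun i => rpow (phi i x) p *E f x)).
  - rewrite <- gsum_scal_r. rewrite Lx_sum. apply bscal_1.
  - intros i _. rewrite bscal_assoc. f_equal. rewrite pq.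
    rewrite (rpow_split (phi i x) p) by apply phi_01. auto.
Qed.

Lemma partial_eval (A : Op X E) L f x :
  partial_M p q phi A L f x = Esum L (term A f x).
Proof.
  induction L as [|a L IH]; simpl. reflexivity.
  unfold partial_M in *. simpl. unfold fadd at 1. rewrite IH. reflexivity.
Qed.

Lemma sub_cancel (a b : E) : a +E -E (a +E b) = -E b.
Proof.
  rewrite !bopp_scal, bscal_distr_l. rewrite badd_assoc. rewrite <- bopp_scal.
  rewrite badd_opp, badd_0. auto.
Qed.

Lemma lsum_if0 {T : Type} (L : list T) (P : T -> Prop) (g : T -> R) :
  lsum L (fun x => if dec (P x) then 0 else g x) = lsum (filter (fun x => negb (dec (P x))) L) g.
Proof.
  induction L; simpl; auto. destruct (dec (P a)); simpl; rewrite IHL; ring.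
Qed.

Lemma Mop_strong (A : Op X E) : bounded_op p A -> strong_sum p q phi A (Mop A).
Proof.
  intros HA f Hf eps He.
  set (c := opnorm p A).
  assert (Hc : 0 <= c) by (apply opnorm_nonneg; auto).
  assert (HP : Pb X E p A c) by (apply opnorm_Pb; auto; lra).
  set (cp := rpow c p). assert (Hcp : 0 <= cp) by apply rpow_nonneg.
  set (ep := rpow eps p). assert (Hep : 0 < ep) by (apply rpow_gt0; auto).
  set (e' := ep / (2 * (cp + 1))).
  assert (He' : 0 < e') by (unfold e'; apply Rdiv_lt_0_compat; lra).
  pose proof Hf as Hf'. apply is_lp_bnd in Hf' as [Bf HBf].
  destruct (SS_tail (nfp f) Bf e' HBf (nf_nonneg X E p f) He') as [F [NF HF]].
  exists (nodup eqd (flat_map Lx F)). split. apply NoDup_nodup.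
  intros L NL Hincl.
  set (T := fun i => ~ In i L).
  set (u := fun x => Esum (Lx x) (fun i => if dec (T i) then term A f x i else 0E)).
  assert (Hnrm : forall x, nrm (fsub X E (partial_M p q phi A L f) (Mop A f) x) = nrm (u x)).
  { intros x. unfold fsub. rewrite partial_eval.
    assert (E1 : Esum L (term A f x) =
                 Esum (Lx x) (fun i => if dec (In i L) then term A f x i else 0E)).
    { transitivity (Esum L (fun i => if dec (In i L) then term A f x i else 0E)).
      { apply Egsum_ext_in. intros j Hj. rewrite decT; auto. }
      apply Egsum_reindex; auto. apply Lx_nodup.
      intros j Hj. destruct (dec (In j L)) eqn:Hd.
      2:{ exfalso; apply Hj; reflexivity. }
      apply (proj1 (decP _)) in Hd. split; auto. intros _. apply Lx_in. intros H0. apply Hj.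
      unfold term. rewrite H0, rpow_0. apply bscal_0l. }
    assert (E2 : Mop A f x = Esum (Lx x) (fun i => if dec (In i L) then term A f x i else 0E)
                            +E u x).
    { unfold Mop, u. rewrite <- Egsum_add. apply Egsum_ext_in. intros i _. unfold T.
      destruct (excluded_middle_informative (In i L)).
      - rewrite decT, decF by auto. rewrite badd_0r. auto.
      - rewrite decF, decT by auto. rewrite badd_0. auto. }
    rewrite E1, E2, sub_cancel. apply bnorm_opp. }
  assert (HB : bnd (nfp (fsub X E (partial_M p q phi A L f) (Mop A f))) (cp * e')).
  { eapply bnd_dom. intros x. unfold nf at 1. rewrite Hnrm. apply Rle_refl.
    apply (Mbound A c T f (fun x => if dec (In x F) then 0 else nfp f x)); auto.
    - intros x K HK. destruct (dec (In x F)) eqn:Hx.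
      + apply (proj1 (decP _)) in Hx. rewrite lsum_zero. lra. intros i _. unfold T.
        destruct (dec (~ In i L)) eqn:Hi; auto. apply (proj1 (decP _)) in Hi.
        destruct (Req_dec (phi i x) 0) as [H0|H0]. rewrite H0; apply rpow_0.
        exfalso. apply Hi. apply Hincl. apply nodup_In. apply in_flat_map.
        exists x. split; auto. apply Lx_in; auto.
      + rewrite <- (Rmult_1_l (nfp f x)) at 2. apply Rmult_le_compat_r. apply nf_nonneg.
        eapply Rle_trans; [|apply (weights_le1 x K HK)]. apply lsum_le. intros i _.
        destruct (dec (T i)). lra. apply rpow_nonneg.
    - intros XL HXL. rewrite lsum_if0. apply HF. apply NoDup_filter; auto.
      intros y Hy. apply filter_In in Hy as [_ Hy]. intros Hy'. rewrite decT in Hy by auto.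
      discriminate. }
  set (g := fsub X E (partial_M p q phi A L f) (Mop A f)) in *.
  assert (HS : SS (nfp g) <= cp * e') by (apply SS_le; auto).
  assert (HS0 : 0 <= SS (nfp g)) by (eapply SS_nonneg; eauto).
  assert (Hlt : cp * e' < ep).
  { unfold e'. replace (cp * (ep / (2 * (cp + 1)))) with (ep * (cp / (2 * (cp + 1)))) by (field; lra).
    assert (cp / (2 * (cp + 1)) < 1).
    { apply (Rmult_lt_reg_r (2 * (cp + 1))). lra. unfold Rdiv.
      rewrite Rmult_assoc, Rinv_l by lra. lra. }
    nra. }
  rewrite lp_norm_SS. eapply Rle_lt_trans. apply rpow_le. split. auto. exact HS.
  left; apply Rinv_0_lt_compat; lra.
  rewrite <- (rpow_inv eps p) by lra. apply rpow_lt. split. nra. auto.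
  apply Rinv_0_lt_compat; lra.
Qed.
End MOP.

Section BAND.
Variables (X : MetricSpace) (E : Banach) (p : R).
Hypothesis hp : 1 < p.
Notation "0E" := (bzero E).
Notation "a +E b" := (badd E a b) (at level 50, left associativity).
Notation "-E a" := (bopp E a) (at level 35).
Notation "c *E a" := (bscal E c a) (at level 40).
Notation nrm := (bnorm E).
Notation Esum := (gsum (badd E) (bzero E)).
Notation nfp := (nf X E p).
Notation zf := (zf X E).

Lemma lp_fin (g : X -> E) F : NoDup F -> (forall y, ~ In y F -> g y = 0E) -> is_lp X E p g.
Proof.
  intros NF Hg. apply is_lp_bnd. exists (lsum F (nfp g)). intros L HL.
  apply lsum_incl; auto. intros y _ Hy. apply NNPP. intros Hn. apply Hy.
  unfold nf. rewrite Hg by auto. rewrite bnorm_0. apply rpow_0. apply nf_nonneg.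
Qed.

Lemma lp_delta y e : is_lp X E p (delta X E y e).
Proof.
  apply (lp_fin _ [y]). repeat constructor; auto. intros z Hz. unfold delta.
  destruct (excluded_middle_informative (z = y)); auto. subst. exfalso; apply Hz; left; auto.
Qed.

Lemma delta_0 y : delta X E y 0E = zf.
Proof. extensionality z. unfold delta, zf. destruct (excluded_middle_informative (z = y)); auto. Qed.

Lemma delta_scal y c e : delta X E y (c *E e) = fscal X E c (delta X E y e).
Proof.
  extensionality z. unfold delta, fscal. destruct (excluded_middle_informative (z = y)); auto.
  rewrite bscal_0r; auto.
Qed.

Lemma bnd_delta y e : bnd (nfp (delta X E y e)) (rpow (nrm e) p).
Proof.
  intros L HL. eapply Rle_trans. apply (lsum_incl L [y]); auto. repeat constructor; auto.
  intros z _ Hz. left. unfold nf, delta in Hz. destruct (excluded_middle_informative (z = y)); auto.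
  exfalso; apply Hz. rewrite bnorm_0. apply rpow_0. apply nf_nonneg.
  simpl. unfold nf, delta. destruct (excluded_middle_informative (y = y)); [|tauto]. lra.
Qed.

Lemma SS_delta y e : SS (nfp (delta X E y e)) = rpow (nrm e) p.
Proof.
  apply Rle_antisym. apply SS_le. apply bnd_delta.
  pose proof (SS_ge _ _ [y] (bnd_delta y e)) as H. simpl in H.
  unfold nf, delta in H. destruct (excluded_middle_informative (y = y)); [|tauto].
  rewrite Rplus_0_r in H. apply H. repeat constructor; auto.
Qed.

Lemma fin_decomp (B : Op X E) F g x : bounded_op p B -> NoDup F ->
  (forall y, ~ In y F -> g y = 0E) ->
  B g x = Esum F (fun y => B (delta X E y (g y)) x).
Proof.
  intros HB. revert g. induction F as [|a F IH]; intros g NF Hg.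
  - assert (g = zf) by (extensionality y; apply Hg; auto).
    subst. rewrite (lin_zero X E p B HB). reflexivity.
  - inversion NF; subst.
    set (g' := fun y => if excluded_middle_informative (y = a) then 0E else g y).
    assert (Hg' : forall y, ~ In y F -> g' y = 0E).
    { intros y Hy. unfold g'. destruct (excluded_middle_informative (y = a)); auto.
      apply Hg. intros [H|H]; auto. }
    assert (Eg : g = fadd X E (delta X E a (g a)) (fscal X E 1 g')).
    { extensionality y. unfold fadd, fscal, delta, g'.
      destruct (excluded_middle_informative (y = a)). subst. rewrite bscal_0r, badd_0r; auto.
      rewrite bscal_1, badd_0; auto. }
    destruct HB as [Hlp [Hlin Hbd]].
    rewrite Eg at 1. rewrite Hlin. 2: apply lp_delta. 2: apply (lp_fin g' F); auto.
    rewrite bscal_1. simpl. f_equal. rewrite IH; auto. apply Egsum_ext_in.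
    intros y Hy. unfold g'. destruct (excluded_middle_informative (y = a)); auto.
    subst; contradiction.
Qed.

Lemma local_fin (B : Op X E) R0 F k x : bounded_op p B ->
  (forall x y e, R0 < Defs.dist X x y -> entry B x y e = 0E) -> NoDup F ->
  (forall y, ~ In y F -> k y = 0E) -> (forall y, Defs.dist X x y <= R0 -> k y = 0E) ->
  B k x = 0E.
Proof.
  intros HB Hent NF Hk Hl. rewrite (fin_decomp B F) by auto. apply Egsum_zero.
  intros y _. destruct (excluded_middle_informative (k y = 0E)) as [e|e].
  - rewrite e, delta_0, (lin_zero X E p B HB). auto.
  - apply Hent. destruct (Rle_lt_dec (Defs.dist X x y) R0); auto. exfalso; auto.
Qed.

Lemma locality (B : Op X E) R0 k x : bounded_op p B ->
  (forall x y e, R0 < Defs.dist X x y -> entry B x y e = 0E) -> is_lp X E p k ->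
  (forall y, Defs.dist X x y <= R0 -> k y = 0E) -> B k x = 0E.
Proof.
  intros HB Hent Hk Hl. apply NNPP. intros Hv.
  set (v := B k x) in *.
  assert (Hnv : 0 < nrm v).
  { destruct (bnorm_nonneg E v) as [H|H]; auto. exfalso. apply Hv. apply bnorm_eq0; auto. }
  set (c := opnorm p B). assert (Hc : 0 <= c) by (apply opnorm_nonneg; auto).
  assert (HP : Pb X E p B c) by (apply opnorm_Pb; auto; lra).
  set (cp := rpow c p). assert (Hcp : 0 <= cp) by apply rpow_nonneg.
  set (ev := rpow (nrm v) p). assert (Hev : 0 < ev) by (apply rpow_gt0; auto).
  set (eps := ev / (2 * (cp + 1))).
  assert (He : 0 < eps) by (unfold eps; apply Rdiv_lt_0_compat; lra).
  pose proof Hk as Hk'. apply is_lp_bnd in Hk' as [Bk HBk].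
  destruct (SS_tail (nfp k) Bk eps HBk (nf_nonneg X E p k) He) as [F [NF HF]].
  set (kF := fun y => if excluded_middle_informative (In y F) then k y else 0E).
  assert (HkF : forall y, ~ In y F -> kF y = 0E).
  { intros y Hy. unfold kF. destruct (excluded_middle_informative (In y F)); tauto. }
  assert (HlkF : is_lp X E p kF) by (apply (lp_fin _ F); auto).
  assert (H0 : B kF x = 0E).
  { apply (local_fin B R0 F); auto. intros y Hy. unfold kF.
    destruct (excluded_middle_informative (In y F)); auto. }
  set (r := fadd X E k (fscal X E (-1) kF)).
  assert (Hr : forall y, nfp r y = if dec (In y F) then 0 else nfp k y).
  { intros y. unfold r, nf, fadd, fscal, kF.
    destruct (excluded_middle_informative (In y F)).
    - rewrite decT by auto. rewrite <- bopp_scal, badd_opp, bnorm_0. apply rpow_0.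
    - rewrite decF by auto. rewrite bscal_0r, badd_0r. auto. }
  assert (HBr : bnd (nfp r) eps).
  { intros L HL. rewrite (lsum_ext_in L _ _ (fun y _ => Hr y)). rewrite lsum_if0.
    apply HF. apply NoDup_filter; auto. intros y Hy. apply filter_In in Hy as [_ Hy].
    intros Hy'. rewrite decT in Hy by auto. discriminate. }
  assert (Hlr : is_lp X E p r) by (apply is_lp_bnd; eauto).
  assert (HBrx : B r x = v).
  { destruct HB as [_ [Hlin _]]. unfold r. rewrite Hlin by auto. rewrite H0, bscal_0r, badd_0r.
    auto. }
  specialize (HP r Hlr [x]). simpl in HP. rewrite Rplus_0_r in HP.
  assert (HP' : nfp (B r) x <= cp * SS (nfp r)) by (apply HP; repeat constructor; auto).
  unfold nf at 1 in HP'. rewrite HBrx in HP'. fold ev in HP'.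
  assert (SS (nfp r) <= eps) by (apply SS_le; auto).
  assert (cp * SS (nfp r) <= cp * eps) by (apply Rmult_le_compat_l; auto).
  assert (cp * eps < ev).
  { unfold eps. replace (cp * (ev / (2 * (cp + 1)))) with (ev * (cp / (2 * (cp + 1)))) by (field; lra).
    assert (cp / (2 * (cp + 1)) < 1).
    { apply (Rmult_lt_reg_r (2 * (cp + 1))). lra. unfold Rdiv.
      rewrite Rmult_assoc, Rinv_l by lra. lra. }
    nra. }
  lra.
Qed.

End BAND.

Lemma lsum_abs {T} (L : list T) g : Rabs (lsum L g) <= lsum L (fun i => Rabs (g i)).
Proof.
  induction L; simpl. rewrite Rabs_R0; lra.
  eapply Rle_trans. apply Rabs_triang. lra.
Qed.

Lemma max_in {T} (L : list T) (a : T -> R) : L <> [] ->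
  exists y, In y L /\ forall z, In z L -> a z <= a y.
Proof.
  induction L as [|b L IH]; intros H. contradiction.
  destruct L as [|b' L'].
  - exists b. split. left; auto. intros z [->|[]]. lra.
  - destruct IH as [y [Hy Hm]]. discriminate.
    destruct (Rle_dec (a b) (a y)).
    + exists y. split. right; auto. intros z [<-|Hz]; auto.
    + exists b. split. left; auto. intros z [<-|Hz]. lra. specialize (Hm z Hz). lra.
Qed.

Lemma pow_sum_le {T} (p : R) (L : list T) (a : T -> R) : 1 < p -> (forall y, 0 <= a y) ->
  rpow (lsum L a) p <= rpow (INR (length L)) p * lsum L (fun y => rpow (a y) p).
Proof.
  intros Hp Ha. destruct L as [|b L'].
  - simpl. rewrite rpow_0. lra.
  - destruct (max_in (b :: L') a) as [y [Hy Hm]]. discriminate.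
    assert (H1 : lsum (b :: L') a <= INR (length (b :: L')) * a y) by (apply lsum_len; auto).
    assert (H0 : 0 <= lsum (b :: L') a) by (apply lsum_nonneg; auto).
    eapply Rle_trans. apply rpow_le. split. auto. exact H1. lra.
    rewrite rpow_mult by (auto; apply pos_INR).
    apply Rmult_le_compat_l. apply rpow_nonneg.
    apply (lsum_elem _ (fun y => rpow (a y) p)); auto. intros; apply rpow_nonneg.
Qed.

Section BEST.
Variables (X : MetricSpace) (E : Banach) (p q : R).
Hypothesis hp : 1 < p.
Hypothesis hq : / p + / q = 1.
Variables (I : Type) (phi : I -> X -> R).
Hypothesis hpart : metric_p_partition X p phi.
Notation "0E" := (bzero E).
Notation "a +E b" := (badd E a b) (at level 50, left associativity).
Notation "-E a" := (bopp E a) (at level 35).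
Notation "c *E a" := (bscal E c a) (at level 40).
Notation nrm := (bnorm E).
Notation Esum := (gsum (badd E) (bzero E)).
Notation nfp := (nf X E p).
Notation zf := (zf X E).
Notation M := (Mop X E p q I phi).
Notation Lx := (Lx X p I phi).

Lemma lp_dom (g f : X -> E) : (forall y, nrm (g y) <= nrm (f y)) -> is_lp X E p f -> is_lp X E p g.
Proof.
  intros H Hf. apply is_lp_bnd in Hf as [B HB]. apply is_lp_bnd. exists B.
  eapply bnd_dom; eauto. intros y. unfold nf. apply rpow_le. split; auto. apply bnorm_nonneg. lra.
Qed.

Lemma band_est (B : Op X E) R0 K r eps f :
  bounded_op p B -> (forall x y e, R0 < Defs.dist X x y -> entry B x y e = 0E) ->
  (forall x, exists L, (length L <= K)%nat /\ forall y, Defs.dist X x y <= R0 -> In y L) ->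
  R0 <= r -> has_variation X p phi r eps -> 0 <= eps -> is_lp X E p f ->
  bnd (nfp (fun x => M B f x +E -E B f x))
      (rpow (eps * opnorm p B) p * rpow (INR K) p * INR K * SS (nfp f)).
Proof.
  intros HB Hent Hgeo Hr Hvar Heps Hf.
  set (c := opnorm p B). assert (Hc : 0 <= c) by (apply opnorm_nonneg; auto).
  assert (HP : Pb X E p B c) by (apply opnorm_Pb; auto; lra).
  pose proof Hf as Hf'. apply is_lp_bnd in Hf' as [Bf HBf].
  set (BlP := fun x (L : list X) => (length L <= K)%nat /\ forall y, Defs.dist X x y <= R0 -> In y L).
  set (Bl := fun x => nodup eqd (epsilon (inhabits []) (BlP x))).
  assert (HBl : forall x, NoDup (Bl x) /\ (length (Bl x) <= K)%nat /\
                 forall y, Defs.dist X x y <= R0 -> In y (Bl x)).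
  { intros x. assert (H := epsilon_spec (inhabits []) (BlP x) (Hgeo x)).
    destruct H as [H1 H2]. unfold Bl. split. apply NoDup_nodup. split.
    - eapply Nat.le_trans; [|exact H1]. apply NoDup_incl_length. apply NoDup_nodup.
      intros y Hy. apply nodup_In in Hy; auto.
    - intros y Hy. apply nodup_In. auto. }
  set (h := fun x y => if dec (Defs.dist X x y <= R0) then nfp f y else 0).
  assert (PW : forall x, nfp (fun x => M B f x +E -E B f x) x <=
     rpow (eps * c) p * rpow (INR K) p * lsum (Bl x) (h x)).
  { intros x. destruct (HBl x) as [NBl [LBl CBl]].
    set (fb := fun y => if excluded_middle_informative (Defs.dist X x y <= R0) then f y else 0E).
    set (fo := fun y => if excluded_middle_informative (Defs.dist X x y <= R0) then 0E else f y).
    assert (Hfb : is_lp X E p fb).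
    { apply (lp_dom fb f); auto. intros y. unfold fb. destruct (excluded_middle_informative _).
      lra. rewrite bnorm_0. apply bnorm_nonneg. }
    assert (Hfo : is_lp X E p fo).
    { apply (lp_dom fo f); auto. intros y. unfold fo. destruct (excluded_middle_informative _).
      rewrite bnorm_0. apply bnorm_nonneg. lra. }
    assert (Lfmul : forall i g, is_lp X E p g -> is_lp X E p (fmul X E (phi i) g)).
    { intros. eapply lp_fmul; eauto. }
    assert (S1 : B f x = B fb x).
    { assert (f = fadd X E fb (fscal X E 1 fo)).
      { extensionality y. unfold fadd, fscal, fb, fo. rewrite bscal_1.
        destruct (excluded_middle_informative _); symmetry; [apply badd_0r | apply badd_0]. }
      pose proof HB as [Hlp [Hlin _]].
      rewrite H at 1. rewrite Hlin by auto. rewrite (locality X E p hp B R0 fo x); auto.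
      rewrite bscal_0r, badd_0r; auto.
      intros y Hy. unfold fo. destruct (excluded_middle_informative _); tauto. }
    assert (S2 : forall i, B (fmul X E (phi i) f) x = B (fmul X E (phi i) fb) x).
    { intros i. assert (fmul X E (phi i) f = fadd X E (fmul X E (phi i) fb) (fscal X E 1 (fmul X E (phi i) fo))).
      { extensionality y. unfold fmul, fadd, fscal, fb, fo. rewrite bscal_1.
        destruct (excluded_middle_informative _); rewrite ?bscal_0r; symmetry; [apply badd_0r | apply badd_0]. }
      pose proof HB as HB'. destruct HB' as [Hlp [Hlin _]].
      rewrite H at 1. rewrite Hlin by auto. rewrite (locality X E p hp B R0 (fmul X E (phi i) fo) x); auto.
      rewrite bscal_0r, badd_0r; auto.
      intros y Hy. unfold fo, fmul. destruct (excluded_middle_informative _); try tauto. apply bscal_0r. }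
    set (v := fun y => B (delta X E y (fb y)) x).
    assert (Hsupp : forall y, ~ In y (Bl x) -> fb y = 0E).
    { intros y Hy. unfold fb. destruct (excluded_middle_informative _); auto.
      exfalso; apply Hy; auto. }
    assert (S3 : B fb x = Esum (Bl x) v).
    { apply (fin_decomp X E p); auto. }
    assert (S4 : forall i, B (fmul X E (phi i) fb) x = Esum (Bl x) (fun y => phi i y *E v y)).
    { intros i. rewrite (fin_decomp X E p B (Bl x)); auto.
      - apply Egsum_ext_in. intros y _. unfold v, fmul. rewrite delta_scal.
        rewrite (lin_scal X E p) by (auto; apply lp_delta). reflexivity.
      - intros y Hy. unfold fmul. rewrite Hsupp by auto. apply bscal_0r. }
    set (rr := fun i => rpow (phi i x) (p / q)).
    set (coef := fun y => lsum (Lx x) (fun i => rr i * (phi i y - phi i x))).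
    assert (S5 : M B f x +E -E B f x = Esum (Bl x) (fun y => coef y *E v y)).
    { assert (HM : M B f x = Esum (Bl x) (fun y => (lsum (Lx x) (fun i => rr i * phi i y)) *E v y)).
      { unfold Mop, term. fold rr.
        rewrite (Egsum_ext_in _ (Lx x) _ (fun i => Esum (Bl x) (fun y => (rr i * phi i y) *E v y))).
        - rewrite Egsum_swap. apply Egsum_ext_in. intros y _. symmetry. apply gsum_scal_r.
        - intros i _. rewrite S2, S4, gsum_scal. apply Egsum_ext_in. intros y _.
          apply bscal_assoc. }
      assert (Hone : lsum (Lx x) (fun i => rr i * phi i x) = 1).
      { rewrite <- (Lx_sum X p I phi hpart x). apply lsum_ext_in. intros i _. unfold rr.
        rewrite (pq p q hp hq). rewrite (rpow_split (phi i x) p); auto. eapply phi_01; eauto. }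
      rewrite HM, S1, S3. unfold coef.
      rewrite (Egsum_ext_in _ (Bl x) (fun y => lsum (Lx x) (fun i => rr i * (phi i y - phi i x)) *E v y)
         (fun y => (lsum (Lx x) (fun i => rr i * phi i y)) *E v y +E (-1) *E v y)).
      - rewrite Egsum_add. f_equal. rewrite <- gsum_scal. symmetry. symmetry. apply bopp_scal.
      - intros y _. rewrite <- bscal_distr_r. f_equal.
        rewrite (lsum_ext_in _ _ (fun i => rr i * phi i y + (-1) * (rr i * phi i x))) by (intros; ring).
        rewrite lsum_plus, lsum_mult_l, Hone. ring. }
    assert (Hr0 : forall i, 0 <= rr i) by (intros; apply rpow_nonneg).
    assert (S6 : nrm (M B f x +E -E B f x) <= lsum (Bl x) (fun y => eps * c * nrm (fb y))).
    { rewrite S5. eapply Rle_trans. apply gsum_norm. apply lsum_le. intros y _.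
      rewrite bnorm_scal. unfold fb.
      destruct (excluded_middle_informative (Defs.dist X x y <= R0)) as [Hd|Hd].
      - assert (Hco : Rabs (coef y) <= eps).
        { unfold coef. eapply Rle_trans. apply lsum_abs.
          rewrite (lsum_ext_in _ _ (fun i => rpow (phi i x) (p - 1) * Rabs (phi i y - phi i x))).
          2:{ intros i _. rewrite Rabs_mult, Rabs_right. unfold rr. rewrite (pq p q hp hq). auto.
              apply Rle_ge, Hr0. }
          destruct (Hvar x y (Rle_trans _ _ _ Hd Hr)) as [Lv [NLv [CLv SLv]]].
          assert (Hh := holder p (Lx x) (fun i => phi i x) (fun i => Rabs (phi i y - phi i x)) hp).
          assert (Hh2 : rpow (lsum (Lx x) (fun i => rpow (phi i x) (p - 1) * Rabs (phi i y - phi i x))) p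
                        < rpow eps p).
          { eapply Rle_lt_trans. apply Hh.
            - intros; eapply phi_01; eauto.
            - intros; apply Rabs_pos.
            - eapply weights_le1; eauto. apply (Lx_nodup X p I phi hpart).
            - rewrite (lsum_ext_in (Lx x) _ (fun i => rpow (Rabs (phi i x - phi i y)) p))
                by (intros; simpl; rewrite Rabs_minus_sym; auto).
              eapply Rle_lt_trans; [|exact SLv]. apply lsum_incl; auto. apply (Lx_nodup X p I phi hpart).
              + intros i _ Hi. apply CLv. destruct (Req_dec (phi i x) 0) as [H0|H0]; auto.
                right. intros H1. apply Hi. rewrite H0, H1. rewrite Rminus_0_r, Rabs_R0. apply rpow_0.
              + intros; apply rpow_nonneg. }
          apply Rlt_le. eapply rpow_lt_inv; [| | |exact Hh2]; auto.
          apply lsum_nonneg. intros. pose proof (rpow_nonneg (phi i x) (p-1)). pose proof (Rabs_pos (phi i y - phi i x)). nra.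
          lra. }
        assert (Hv : nrm (v y) <= c * nrm (f y)).
        { pose proof (HP _ (lp_delta X E p y (fb y)) [x]) as H1. simpl in H1.
          rewrite Rplus_0_r, SS_delta in H1. assert (H2 : nfp (B (delta X E y (fb y))) x <= rpow c p * rpow (nrm (fb y)) p) by (apply H1; repeat constructor; auto).
          unfold nf in H2. fold (v y) in H2. unfold fb in H2.
          destruct (excluded_middle_informative _); [|tauto].
          rewrite <- rpow_mult in H2 by (auto; apply bnorm_nonneg).
          eapply rpow_le_inv; [| | |exact H2]. apply bnorm_nonneg.
          pose proof (bnorm_nonneg E (f y)). nra. lra. }
        pose proof (Rabs_pos (coef y)). pose proof (bnorm_nonneg E (v y)).
        pose proof (bnorm_nonneg E (f y)).
        apply Rle_trans with (eps * nrm (v y)). apply Rmult_le_compat_r; auto.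
        rewrite Rmult_assoc. apply Rmult_le_compat_l; auto.
      - assert (v y = 0E).
        { unfold v, fb. destruct (excluded_middle_informative _); [tauto|].
          rewrite delta_0, (lin_zero X E p B HB). reflexivity. }
        rewrite H, !bnorm_0. lra. }
    unfold nf at 1. eapply Rle_trans. apply rpow_le. split. apply bnorm_nonneg. exact S6. lra.
    eapply Rle_trans. apply pow_sum_le; auto.
    intros y. pose proof (bnorm_nonneg E (fb y)). apply Rmult_le_pos; auto. apply Rmult_le_pos; auto.
    assert (L1 : lsum (Bl x) (fun y => rpow (eps * c * nrm (fb y)) p) <= rpow (eps * c) p * lsum (Bl x) (h x)).
    { rewrite <- lsum_mult_l. apply lsum_le. intros y _. rewrite rpow_mult.
      apply Rmult_le_compat_l. apply rpow_nonneg. unfold h, fb, nf.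
      destruct (excluded_middle_informative _). rewrite decT by auto. lra.
      rewrite decF by auto. rewrite bnorm_0, rpow_0. lra.
      apply Rmult_le_pos; auto. apply bnorm_nonneg. }
    assert (L2 : rpow (INR (length (Bl x))) p <= rpow (INR K) p).
    { apply rpow_le. split. apply pos_INR. apply le_INR; auto. lra. }
    assert (L3 : 0 <= lsum (Bl x) (fun y => rpow (eps * c * nrm (fb y)) p)).
    { apply lsum_nonneg; intros; apply rpow_nonneg. }
    replace (rpow (eps * c) p * rpow (INR K) p * lsum (Bl x) (h x)) with
       (rpow (INR K) p * (rpow (eps * c) p * lsum (Bl x) (h x))) by ring.
    apply Rmult_le_compat; auto. apply rpow_nonneg. }
  intros XL NXL.
  eapply Rle_trans. apply lsum_le. intros x _. apply PW.
  rewrite lsum_mult_l.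
  set (Y := nodup eqd (flat_map Bl XL)).
  assert (NY : NoDup Y) by apply NoDup_nodup.
  assert (Hh0 : forall x y, 0 <= h x y).
  { intros. unfold h. destruct (dec _). apply nf_nonneg. lra. }
  assert (D1 : lsum XL (fun x => lsum (Bl x) (h x)) <= lsum Y (fun y => lsum XL (fun x => h x y))).
  { rewrite <- lsum_swap. apply lsum_le. intros x Hx. apply lsum_sub; auto. apply HBl.
    intros y Hy. apply nodup_In. apply in_flat_map. eauto. }
  assert (D2 : forall y, lsum XL (fun x => h x y) <= INR K * nfp f y).
  { intros y. destruct (HBl y) as [NBy [LBy CBy]].
    eapply Rle_trans. apply (lsum_incl XL (Bl y)); auto.
    - intros x _ Hx. apply CBy. rewrite Defs.dist_sym. unfold h in Hx.
      destruct (dec (Defs.dist X x y <= R0)) eqn:Hd. apply (proj1 (decP _)) in Hd; auto.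
      lra.
    - eapply Rle_trans. apply lsum_le. intros x _.
      assert (h x y <= nfp f y). { unfold h. destruct (dec _). lra. apply nf_nonneg. }
      exact H.
      eapply Rle_trans. apply lsum_len. intros; apply Rle_refl.
      apply Rmult_le_compat_r. apply nf_nonneg. apply le_INR; auto. }
  assert (D3 : lsum Y (fun y => INR K * nfp f y) <= INR K * SS (nfp f)).
  { rewrite lsum_mult_l. apply Rmult_le_compat_l. apply pos_INR. eapply SS_ge; eauto. }
  assert (D4 : lsum XL (fun x => lsum (Bl x) (h x)) <= INR K * SS (nfp f)).
  { eapply Rle_trans. exact D1. eapply Rle_trans; [|exact D3]. apply lsum_le. intros; apply D2. }
  fold c. pose proof (rpow_nonneg (eps * c) p). pose proof (rpow_nonneg (INR K) p).
  rewrite !Rmult_assoc. apply Rmult_le_compat_l; auto. apply Rmult_le_compat_l; auto.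
Qed.

End BEST.

Section FIN.
Variables (X : MetricSpace) (E : Banach) (p : R).
Hypothesis hp : 1 < p.
Notation "0E" := (bzero E).
Notation "a +E b" := (badd E a b) (at level 50, left associativity).
Notation "-E a" := (bopp E a) (at level 35).
Notation "c *E a" := (bscal E c a) (at level 40).
Notation nrm := (bnorm E).
Notation nfp := (nf X E p).
Notation zf := (zf X E).

Lemma rearr (a b c d : E) : (a +E b) +E -E (c +E d) = (a +E -E c) +E (b +E -E d).
Proof.
  rewrite !bopp_scal, bscal_distr_l.
  rewrite !badd_assoc. f_equal. rewrite <- !badd_assoc. f_equal. apply badd_comm.
Qed.

Lemma rearr_s (a b c d : E) s : (a +E s *E b) +E -E (c +E s *E d) = (a +E -E c) +E s *E (b +E -E d).
Proof.
  rewrite rearr. f_equal. rewrite !bopp_scal, bscal_distr_l, !bscal_assoc.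
  rewrite Rmult_comm. auto.
Qed.

Lemma two_pow a b : 0 <= a -> 0 <= b -> rpow (a + b) p <= rpow 2 p * (rpow a p + rpow b p).
Proof.
  intros Ha Hb. assert (a + b <= 2 * Rmax a b) by (unfold Rmax; destruct (Rle_dec a b); lra).
  eapply Rle_trans. apply rpow_le. split. lra. exact H. lra.
  rewrite rpow_mult by (try lra; apply (Rle_trans _ a); auto; apply Rmax_l).
  apply Rmult_le_compat_l. apply rpow_nonneg.
  pose proof (rpow_nonneg a p). pose proof (rpow_nonneg b p).
  unfold Rmax; destruct (Rle_dec a b); lra.
Qed.

Lemma three_pow a b c : 0 <= a -> 0 <= b -> 0 <= c ->
  rpow (a + b + c) p <= rpow 3 p * (rpow a p + rpow b p + rpow c p).
Proof.
  intros Ha Hb Hc. set (m := Rmax a (Rmax b c)).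
  assert (Hm1 : a <= m) by apply Rmax_l.
  assert (Hm2 : b <= m) by (eapply Rle_trans; [apply (Rmax_l b c)|apply Rmax_r]).
  assert (Hm3 : c <= m) by (eapply Rle_trans; [apply (Rmax_r b c)|apply Rmax_r]).
  assert (a + b + c <= 3 * m) by lra.
  eapply Rle_trans. apply rpow_le. split. lra. exact H. lra.
  rewrite rpow_mult by lra. apply Rmult_le_compat_l. apply rpow_nonneg.
  pose proof (rpow_nonneg a p). pose proof (rpow_nonneg b p). pose proof (rpow_nonneg c p).
  assert (m = a \/ m = b \/ m = c).
  { unfold m, Rmax. destruct (Rle_dec b c); destruct (Rle_dec a _); auto. }
  destruct H3 as [H4|[H4|H4]]; rewrite H4; lra.
Qed.

Lemma bounded_osub (A B : Op X E) : bounded_op p A -> bounded_op p B -> bounded_op p (osub A B).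
Proof.
  intros HA HB.
  set (m := Rmax (opnorm p A) (opnorm p B)).
  assert (HA0 := opnorm_nonneg X E p A HA). assert (HB0 := opnorm_nonneg X E p B HB).
  assert (HmA : opnorm p A <= m) by apply Rmax_l. assert (HmB : opnorm p B <= m) by apply Rmax_r.
  apply (bounded_from_Pb X E p hp _ (4 * m)).
  - lra.
  - intros g Hg L HL. pose proof (opnorm_Pb X E p hp A HA g Hg L HL) as H1.
    pose proof (opnorm_Pb X E p hp B HB g Hg L HL) as H2.
    pose proof Hg as Hg'. apply is_lp_bnd in Hg' as [Bg HBg].
    assert (HS : 0 <= SS (nfp g)) by (eapply SS_nonneg; eauto).
    eapply Rle_trans. apply lsum_le. intros x _.
    assert (nfp (osub A B g) x <= rpow 2 p * (nfp (A g) x + nfp (B g) x)).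
    { unfold nf, osub, fsub. eapply Rle_trans. apply rpow_le. split. apply bnorm_nonneg.
      eapply Rle_trans. apply bnorm_triangle. rewrite bnorm_opp. apply Rle_refl. lra.
      apply two_pow; apply bnorm_nonneg. }
    exact H.
    rewrite lsum_mult_l, lsum_plus.
    assert (rpow (opnorm p A) p <= rpow m p) by (apply rpow_le; lra).
    assert (rpow (opnorm p B) p <= rpow m p) by (apply rpow_le; lra).
    assert (E4 : rpow (4 * m) p = rpow 2 p * (rpow 2 p * rpow m p)).
    { replace (4 * m) with (2 * (2 * m)) by ring. rewrite !rpow_mult; lra. }
    assert (H2le : 2 <= rpow 2 p) by (apply rpow_ge_self; lra).
    rewrite E4, Rmult_assoc. pose proof (rpow_nonneg 2 p). pose proof (rpow_nonneg m p).
    apply Rmult_le_compat_l; auto.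
    assert (lsum L (nfp (A g)) + lsum L (nfp (B g)) <= 2 * (rpow m p * SS (nfp g))).
    { assert (rpow (opnorm p A) p * SS (nfp g) <= rpow m p * SS (nfp g)) by (apply Rmult_le_compat_r; auto).
      assert (rpow (opnorm p B) p * SS (nfp g) <= rpow m p * SS (nfp g)) by (apply Rmult_le_compat_r; auto).
      lra. }
    assert (0 <= rpow m p * SS (nfp g)) by (apply Rmult_le_pos; auto).
    nra.
  - intros f g a Hf Hg x. unfold osub, fsub. destruct HA as [_ [HlA _]]. destruct HB as [_ [HlB _]].
    rewrite HlA, HlB by auto. apply rearr_s.
Qed.

Lemma id_bounded : bounded_op p (fun f : X -> E => f).
Proof.
  split; [|split]; auto. exists 1. intros; lra.
Qed.

Lemma id_in_Ap : in_Ap p (fun f : X -> E => f).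
Proof.
  split. apply id_bounded. intros eps He. exists (fun f => f). split.
  - split. apply id_bounded. exists 0. intros x y e Hd. unfold entry, delta.
    destruct (excluded_middle_informative (x = y)); auto. subst.
    assert (Defs.dist X y y = 0) by (apply Defs.dist_eq0; auto). lra.
  - pose proof (opnorm_osub_self X E p hp (fun f => f)). lra.
Qed.

Lemma opnorm_id : inhabited X -> (exists e : E, e <> 0E) -> opnorm p (fun f : X -> E => f) = 1.
Proof.
  intros [x0] [e He]. apply Rle_antisym.
  - apply opnorm_le; auto. lra. intros g Hg. rewrite rpow_one, Rmult_1_l.
    apply is_lp_bnd in Hg as [B HB]. eapply bnd_SS; eauto.
  - destruct (opnorm_lub X E p _ id_bounded) as [Hub _]. apply Hub.
    assert (Hne : 0 < nrm e).
    { destruct (bnorm_nonneg E e) as [H|H]; auto. exfalso; apply He, bnorm_eq0; auto. }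
    set (e' := (/ nrm e) *E e).
    assert (Hn1 : nrm e' = 1).
    { unfold e'. rewrite bnorm_scal. rewrite Rabs_right. field. lra.
      left; apply Rinv_0_lt_compat; auto. }
    assert (Hl : lp_norm X E p (delta X E x0 e') = 1).
    { rewrite lp_norm_SS, SS_delta, Hn1, rpow_one, rpow_one. auto. }
    exists (delta X E x0 e'). split. apply lp_delta. split; lra.
Qed.

End FIN.

Lemma Mop_sub (X : MetricSpace) (E : Banach) p q I phi (A B : Op X E) f x :
  Mop X E p q I phi A f x =
  badd E (Mop X E p q I phi (osub A B) f x) (Mop X E p q I phi B f x).
Proof.
  unfold Mop, term. rewrite <- Egsum_add. apply Egsum_ext_in. intros i _.
  rewrite <- bscal_distr_l. unfold osub, fsub. rewrite bsub_add. auto.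
Qed.

Theorem corollary6p5 (X : MetricSpace) (E : Banach) (p q : R)
  (hX : is_space X) (hA : property_A X p)
  (hXne : inhabited (mcar X)) (hEne : exists e : E, e <> bzero E)
  (hp : 1 < p) (hq : / p + / q = 1)
  (I : nat -> Type) (phi : forall n : nat, I n -> X -> R)
  (hphi : forall n : nat, (1 <= n)%nat ->
     metric_p_partition X p (phi n) /\
     has_variation X p (phi n) (INR n) (/ INR n)) :
  exists M : nat -> Op X E -> Op X E,
    (forall n : nat, (1 <= n)%nat ->
       (forall A : Op X E, in_Ap p A -> strong_sum p q (phi n) A (M n A)) /\
       (forall A : Op X E, in_Ap p A -> in_Ap p (M n A)) /\
       (forall (A B : Op X E) (a : R), in_Ap p A -> in_Ap p B ->
          forall f, is_lp X E p f -> forall x,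
            M n (oadd A (oscal a B)) f x
            = badd E (M n A f x) (bscal E a (M n B f x))) /\
       is_lub (fun s => exists A : Op X E, in_Ap p A /\ opnorm p A <= 1 /\
                                  s = opnorm p (M n A)) 1) /\
    (forall A : Op X E, in_Ap p A ->
       forall eps, 0 < eps -> exists N : nat, forall n : nat, (N <= n)%nat ->
         opnorm p (osub (M n A) A) < eps).
Proof.
  exists (fun n => Mop X E p q (I n) (phi n)). split.
  - intros n Hn. destruct (hphi n Hn) as [Hpart Hvar]. split; [|split; [|split]].
    + intros A HA. apply (Mop_strong X E p q hp hq (I n) (phi n) Hpart A (proj1 HA)).
    + intros A HA. apply (in_Ap_Mop X E p q hp hq (I n) (phi n) Hpart A (proj1 HA)).
    + intros A B a _ _ f _ x. apply Mop_linA.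
    + split.
      * intros s [A [HA [H1 Hs]]]. rewrite Hs. eapply Rle_trans; [|exact H1].
        apply opnorm_le; auto. apply opnorm_nonneg, HA.
        apply (Mop_Pb X E p q hp hq (I n) (phi n) Hpart). apply opnorm_nonneg, HA.
        apply opnorm_Pb; auto. apply HA.
      * intros b Hb. apply Hb. exists (fun f => f). split. apply id_in_Ap; auto.
        rewrite (opnorm_id X E p hp hXne hEne). split. lra.
        rewrite (Mop_id X E p q hp hq (I n) (phi n) Hpart).
        rewrite (opnorm_id X E p hp hXne hEne). auto.
  - intros A HA eps He.
    set (eta := eps / 10). assert (Heta : 0 < eta) by (unfold eta; lra).
    destruct (proj2 HA eta Heta) as [B [[HBb [R0 HR0]] HAB]].
    pose proof (proj1 HA) as HAb.
    set (R1 := Rmax R0 1).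
    assert (HR1 : forall x y e, R1 < Defs.dist X x y -> entry B x y e = bzero E).
    { intros x y e Hd. apply HR0. pose proof (Rmax_l R0 1). fold R1 in H. lra. }
    assert (HR1p : 0 < R1) by (pose proof (Rmax_r R0 1); fold R1 in H; lra).
    destruct hX as [_ hbg]. destruct (hbg R1 HR1p) as [K HK].
    assert (HKg : forall x, exists L, (length L <= K)%nat /\
                   forall y, Defs.dist X x y <= R1 -> In y L).
    { intros x. destruct (HK x) as [L [H1 H2]]. exists L; auto. }
    set (C := osub A B).
    assert (HCb : bounded_op p C) by (apply bounded_osub; auto).
    set (cC := opnorm p C). assert (HcC0 : 0 <= cC) by (apply opnorm_nonneg; auto).
    assert (HcC : cC < eta) by exact HAB.
    set (cB := opnorm p B). assert (HcB0 : 0 <= cB) by (apply opnorm_nonneg; auto).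
    destruct (INR_unbounded (Rmax R1 (cB * INR K * INR K / eta))) as [N0 HN0].
    exists (S N0). intros n Hn.
    assert (Hn1 : (1 <= n)%nat) by lia.
    assert (HnN : INR N0 < INR n) by (apply lt_INR; lia).
    assert (Hnpos : 0 < INR n) by (apply lt_0_INR; lia).
    assert (HnR1 : R1 <= INR n) by (pose proof (Rmax_l R1 (cB * INR K * INR K / eta)); lra).
    assert (HnK : cB * INR K * INR K / INR n <= eta).
    { pose proof (Rmax_r R1 (cB * INR K * INR K / eta)).
      assert (cB * INR K * INR K / eta < INR n) by lra.
      assert (E1 : cB * INR K * INR K = (cB * INR K * INR K / eta) * eta) by (field; lra).
      assert (Ht : cB * INR K * INR K < INR n * eta).
      { rewrite E1. apply Rmult_lt_compat_r; auto. }
      unfold Rdiv. apply Rlt_le. apply Rmult_lt_reg_r with (INR n); auto.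
      rewrite Rmult_assoc, Rinv_l by lra. lra. }
    destruct (hphi n Hn1) as [Hpart Hvar].
    set (Mn := Mop X E p q (I n) (phi n)).
    apply Rle_lt_trans with (9 * eta); [|unfold eta; lra].
    apply opnorm_le; auto. lra.
    intros f Hf XL HXL.
    pose proof Hf as Hf'. apply is_lp_bnd in Hf' as [Bf HBf].
    assert (HS : 0 <= SS (nf X E p f)) by (eapply SS_nonneg; eauto).
    set (S := SS (nf X E p f)) in *.
    set (a1 := nf X E p (Mn C f)).
    set (a2 := nf X E p (fun x => badd E (Mn B f x) (bopp E (B f x)))).
    set (a3 := nf X E p (C f)).
    assert (PW : forall x, nf X E p (osub (Mn A) A f) x <= rpow 3 p * (a1 x + a2 x + a3 x)).
    { intros x. unfold a1, a2, a3, nf. unfold osub at 1, fsub.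
      unfold Mn. rewrite (Mop_sub X E p q (I n) (phi n) A B f x). fold C. fold Mn.
      assert (Ax : A f x = badd E (C f x) (B f x)).
      { unfold C, osub, fsub. rewrite bsub_add. auto. }
      rewrite Ax, rearr.
      eapply Rle_trans. apply rpow_le. split. apply bnorm_nonneg.
      eapply Rle_trans. apply bnorm_triangle. eapply Rle_trans. apply Rplus_le_compat_r.
      eapply Rle_trans. apply bnorm_triangle. rewrite bnorm_opp. apply Rle_refl.
      apply Rle_refl. lra.
      replace (bnorm E (Mn C f x) + bnorm E (C f x) + bnorm E (badd E (Mn B f x) (bopp E (B f x))))
        with (bnorm E (Mn C f x) + bnorm E (badd E (Mn B f x) (bopp E (B f x))) + bnorm E (C f x)) by ring.
      apply three_pow; try lra; apply bnorm_nonneg. }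
    eapply Rle_trans. apply lsum_le. intros x _. apply PW.
    rewrite lsum_mult_l, !lsum_plus.
    assert (H1 : lsum XL a1 <= rpow cC p * S).
    { apply (Mop_Pb X E p q hp hq (I n) (phi n) Hpart C cC); auto. apply opnorm_Pb; auto. }
    assert (H3 : lsum XL a3 <= rpow cC p * S).
    { apply (opnorm_Pb X E p hp C HCb); auto. }
    assert (H2 : lsum XL a2 <= rpow (/ INR n * cB) p * rpow (INR K) p * INR K * S).
    { apply (band_est X E p q hp hq (I n) (phi n) Hpart B R1 K (INR n) (/ INR n) f); auto.
      left; apply Rinv_0_lt_compat; auto. }
    assert (HKp : INR K <= rpow (INR K) p).
    { destruct K. simpl. apply rpow_nonneg. apply rpow_ge_self; try lra.
      rewrite S_INR. pose proof (pos_INR K). lra. }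
    assert (Hinv : 0 <= / INR n) by (left; apply Rinv_0_lt_compat; auto).
    assert (HK0 : 0 <= INR K) by apply pos_INR.
    assert (HxB : 0 <= / INR n * cB) by (apply Rmult_le_pos; auto).
    assert (E2 : rpow (/ INR n * cB * INR K * INR K) p = rpow (/ INR n * cB) p * rpow (INR K) p * rpow (INR K) p).
    { rewrite (rpow_mult (/ INR n * cB * INR K)) by (auto; apply Rmult_le_pos; auto).
      rewrite (rpow_mult (/ INR n * cB)) by auto. auto. }
    assert (Hk : rpow (/ INR n * cB) p * rpow (INR K) p * INR K <= rpow eta p).
    { eapply Rle_trans. apply Rmult_le_compat_l. apply Rmult_le_pos; apply rpow_nonneg. exact HKp.
      rewrite <- E2. apply rpow_le; [|lra]. split. repeat apply Rmult_le_pos; auto.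
      replace (/ INR n * cB * INR K * INR K) with (cB * INR K * INR K / INR n) by (field; lra). auto. }
    assert (HcCp : rpow cC p <= rpow eta p) by (apply rpow_le; lra).
    assert (H2' : lsum XL a2 <= rpow eta p * S).
    { eapply Rle_trans. exact H2. apply Rmult_le_compat_r; auto. }
    assert (H9 : rpow (9 * eta) p = rpow 3 p * (rpow 3 p * rpow eta p)).
    { replace (9 * eta) with (3 * (3 * eta)) by ring. rewrite !rpow_mult; lra. }
    assert (H3p : 3 <= rpow 3 p) by (apply rpow_ge_self; lra).
    rewrite H9, Rmult_assoc. apply Rmult_le_compat_l. apply rpow_nonneg.
    pose proof (rpow_nonneg eta p). pose proof (rpow_nonneg cC p).
    assert (lsum XL a1 + lsum XL a2 + lsum XL a3 <= 3 * (rpow eta p * S)).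
    { assert (rpow cC p * S <= rpow eta p * S) by (apply Rmult_le_compat_r; auto). lra. }
    assert (0 <= rpow eta p * S) by (apply Rmult_le_pos; auto).
    nra.
Qed.
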